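(* Let $\phi\in C^1([0,\infty);[0,\infty))$ satisfy $\max_{r\ge0}\phi(r)=\phi(0)>0$ and $\max_{r\ge0}|r\phi(r)|=A_\infty$ for some constant $A_\infty>0$. Then for every $b>\frac{4}{\phi(0)}$ there exists a solution $v$ of $$r v''=v'\Big(1-v\,\phi\big(\tfrac{v}{r}\big)\Big),\quad r>0,\qquad v(0)=v'(0)=0,$$ such that $\lim_{r\to+\infty}v(r)=b$. *)

(* Defs.v *)
From Stdlib Require Import Reals.
From Coquelicot Require Import Coquelicot.
Open Scope R_scope.

Definition is_right_derive (f : R -> R) (a l : R) : Prop :=
  filterlim (fun h => (f h - f a) / (h - a)) (at_right a) (locally l).

Definition C1_nonneg (f : R -> R) : Prop :=
  exists f' : R -> R,
    (forall r, 0 < r -> is_derive f r (f' r)) /\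
    is_right_derive f 0 (f' 0) /\
    (forall r, 0 < r -> continuous f' r) /\
    filterlim f' (at_right 0) (locally (f' 0)).

(* Main.v *)
Require Import Defs.
From Stdlib Require Import Reals Lra Lia.
From Coquelicot Require Import Coquelicot.
Open Scope R_scope.

Lemma cont_intro (f : R -> R) (x0 : R) :
  (forall eps, 0 < eps -> exists alp, 0 < alp /\
     forall x, Rabs (x - x0) < alp -> Rabs (f x - f x0) < eps) ->
  continuity_pt f x0.
Proof.
  intros H eps Heps. destruct (H eps Heps) as [alp [Ha Hx]].
  exists alp; split; [lra|]. intros x [_ Hd]. apply Hx. exact Hd.
Qed.

Lemma cont_elim (f : R -> R) (x0 : R) :
  continuity_pt f x0 ->
  forall eps, 0 < eps -> exists alp, 0 < alp /\
     forall x, Rabs (x - x0) < alp -> Rabs (f x - f x0) < eps.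
Proof.
  intros H eps Heps. destruct (H eps Heps) as [alp [Ha Hx]].
  exists alp; split; [lra|]. intros x Hd.
  destruct (Req_dec x x0) as [->|Hne].
  - unfold Rminus; rewrite Rplus_opp_r, Rabs_R0; lra.
  - apply (Hx x). split; [split; [exact I| auto]| exact Hd].
Qed.

Lemma geom_tail (u : nat -> R) (c : R) :
  (forall n, Rabs (u (S n) - u n) <= c * (/2)^n) ->
  forall n k, Rabs (u (n + k)%nat - u n) <= 2 * c * (/2)^n * (1 - (/2)^k).
Proof.
  intros H n k. induction k.
  - rewrite Nat.add_0_r. unfold Rminus; rewrite Rplus_opp_r, Rabs_R0. simpl; lra.
  - replace (n + S k)%nat with (S (n + k)) by lia.
    eapply Rle_trans.
    { replace (u (S (n + k)) - u n) with ((u (S (n+k)) - u (n+k)%nat) + (u (n+k)%nat - u n)) by ring.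
      apply Rabs_triang. }
    specialize (H (n+k)%nat). rewrite pow_add in H.
    simpl. nra.
Qed.

Lemma pow_half_pos n : 0 < (/2)^n.
Proof. apply pow_lt; lra. Qed.

Lemma pow_half_small eps : 0 < eps -> exists N, forall n, (n >= N)%nat -> (/2)^n < eps.
Proof.
  intros He. destruct (pow_lt_1_zero (/2)) with (y := eps) as [N HN].
  - rewrite Rabs_right; lra.
  - lra.
  - exists N. intros n Hn. specialize (HN n Hn). rewrite Rabs_right in HN; auto.
    apply Rle_ge, pow_le; lra.
Qed.

Lemma geom_conv (u : nat -> R) (c : R) :
  (forall n, Rabs (u (S n) - u n) <= c * (/2)^n) ->
  exists l, Un_cv u l /\ forall n, Rabs (u n - l) <= 2 * c * (/2)^n.
Proof.
  intros H.
  assert (Hc : 0 <= c).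
  { specialize (H O). simpl in H. pose proof (Rabs_pos (u 1%nat - u O)). lra. }
  assert (Ht := geom_tail u c H).
  assert (Htt : forall n k, Rabs (u (n + k)%nat - u n) <= 2 * c * (/2)^n).
  { intros n k. eapply Rle_trans; [apply Ht|].
    assert (0 <= 2*c*(/2)^n) by (apply Rmult_le_pos; [lra| left; apply pow_half_pos]).
    pose proof (pow_half_pos k). nra. }
  assert (Hcc : Cauchy_crit u).
  { intros eps He.
    destruct (pow_half_small (eps / (4 * c + 1))) as [N HN].
    { apply Rdiv_lt_0_compat; lra. }
    exists N. intros n m Hn Hm. unfold Rdist.
    assert (HNb := HN N (le_n N)).
    assert (Hb : 4 * c * (/2)^N < eps).
    { apply Rmult_lt_compat_l with (r := 4*c+1) in HNb; [|lra].
      field_simplify in HNb; [|lra]. pose proof (pow_half_pos N). nra. }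
    replace (u n - u m) with ((u n - u N) - (u m - u N)) by ring.
    destruct (Nat.le_exists_sub N n Hn) as [p [Hp _]].
    destruct (Nat.le_exists_sub N m Hm) as [q [Hq _]].
    subst n m. rewrite (Nat.add_comm p N), (Nat.add_comm q N).
    pose proof (Htt N p). pose proof (Htt N q).
    eapply Rle_lt_trans; [apply Rabs_triang|]. rewrite Rabs_Ropp. lra. }
  destruct (Rcomplete.R_complete u Hcc) as [l Hl].
  exists l; split; [exact Hl|].
  intros n. apply Rnot_lt_le. intros Hlt.
  set (e := Rabs (u n - l) - 2 * c * (/2)^n).
  destruct (Hl e) as [N HN]; [unfold e; lra|].
  specialize (HN (n + N)%nat ltac:(lia)). unfold Rdist in HN.
  specialize (Htt n N).
  assert (Rabs (u n - l) <= Rabs (u (n+N)%nat - u n) + Rabs (u (n+N)%nat - l)).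
  { replace (u n - l) with (-(u (n+N)%nat - u n) + (u (n+N)%nat - l)) by ring.
    eapply Rle_trans; [apply Rabs_triang|]. rewrite Rabs_Ropp; lra. }
  unfold e in HN. lra.
Qed.

Lemma cv_le (u : nat -> R) l lo hi :
  Un_cv u l -> (forall n, lo <= u n <= hi) -> lo <= l <= hi.
Proof.
  intros Hl Hb. split; apply Rnot_lt_le; intros Hlt.
  - destruct (Hl (lo - l)) as [N HN]; [lra|]. specialize (HN N (le_n N)).
    specialize (Hb N). unfold Rdist in HN. apply Rabs_def2 in HN. lra.
  - destruct (Hl (l - hi)) as [N HN]; [lra|]. specialize (HN N (le_n N)).
    specialize (Hb N). unfold Rdist in HN. apply Rabs_def2 in HN. lra.
Qed.

Lemma cv_unique (u : nat -> R) l1 l2 : Un_cv u l1 -> Un_cv u l2 -> l1 = l2.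
Proof. apply UL_sequence. Qed.

Definition Cont (f : R -> R) := forall x, continuity_pt f x.

Lemma Cont_continuous f x : Cont f -> continuous f x.
Proof. intros H. apply continuity_pt_filterlim, H. Qed.

Lemma ex_RInt_Cont f a b : Cont f -> ex_RInt f a b.
Proof. intros H. apply (ex_RInt_continuous (V:=R_CompleteNormedModule)). intros z _. apply Cont_continuous, H. Qed.

Lemma RInt_exact (F f : R -> R) a b : a <= b ->
  (forall x, a <= x <= b -> is_derive F x (f x)) -> Cont f ->
  RInt f a b = F b - F a.
Proof.
  intros Hab HF Hf. apply is_RInt_unique.
  apply (is_RInt_derive F f).
  - intros x Hx. apply HF. rewrite Rmin_left, Rmax_right in Hx; lra.
  - intros x _. apply Cont_continuous, Hf.
Qed.

Lemma RInt_le_Cont f g a b : a <= b -> Cont f -> Cont g ->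
  (forall x, a <= x <= b -> f x <= g x) -> RInt f a b <= RInt g a b.
Proof.
  intros Hab Hf Hg H. apply RInt_le; auto using ex_RInt_Cont.
  intros x Hx; apply H; lra.
Qed.

Lemma Cont_minus f g : Cont f -> Cont g -> Cont (fun x => f x - g x).
Proof. intros Hf Hg x. apply (continuity_pt_minus f g); auto. Qed.

Lemma Cont_abs f : Cont f -> Cont (fun x => Rabs (f x)).
Proof. intros Hf x. apply (continuity_pt_comp f Rabs); auto. apply Rcontinuity_abs. Qed.

Lemma RInt_diff_bound f g h a b : a <= b -> Cont f -> Cont g -> Cont h ->
  (forall x, a <= x <= b -> Rabs (f x - g x) <= h x) ->
  Rabs (RInt f a b - RInt g a b) <= RInt h a b.
Proof.
  intros Hab Hf Hg Hh H.
  assert (E : RInt f a b - RInt g a b = RInt (fun x => f x - g x) a b).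
  { symmetry. apply (RInt_minus f g a b); apply ex_RInt_Cont; auto. }
  rewrite E. eapply Rle_trans.
  - apply abs_RInt_le; auto. apply ex_RInt_Cont, Cont_minus; auto.
  - apply RInt_le_Cont; auto. apply Cont_abs, Cont_minus; auto.
Qed.

Lemma RInt_0_le f a b : a <= b -> Cont f -> (forall x, a <= x <= b -> 0 <= f x) -> 0 <= RInt f a b.
Proof.
  intros Hab Hf H. assert (E : RInt (fun _ => 0) a b = 0).
  { rewrite (RInt_const (V:=R_CompleteNormedModule)). unfold scal; simpl; unfold mult; simpl. ring. }
  rewrite <- E. apply RInt_le_Cont; auto. intros x; apply continuity_pt_const; intros ? ?; auto.
Qed.

Lemma is_derive_RInt0 f a x : Cont f -> is_derive (fun r => RInt f a r) x (f x).
Proof.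
  intros Hf. apply (is_derive_RInt (V:=R_CompleteNormedModule) f _ a x).
  - apply filter_forall. intros y. apply RInt_correct, ex_RInt_Cont, Hf.
  - apply Cont_continuous, Hf.
Qed.

Lemma derive_Cont (F f : R -> R) : (forall x, is_derive F x (f x)) -> Cont F.
Proof.
  intros H x. apply continuity_pt_filterlim. apply (@ex_derive_continuous R_AbsRing R_NormedModule F x).
  exists (f x). apply H.
Qed.

Lemma is_derive_cont_pt (F : R -> R) x l : is_derive F x l -> continuity_pt F x.
Proof.
  intros H. apply continuity_pt_filterlim. apply (@ex_derive_continuous R_AbsRing R_NormedModule F x). exists l; exact H.
Qed.

Lemma incr_from_deriv (F f : R -> R) a b : a <= b ->
  (forall x, a <= x <= b -> continuity_pt F x) ->
  (forall x, a < x < b -> is_derive F x (f x)) ->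
  (forall x, a < x < b -> 0 <= f x) -> F a <= F b.
Proof.
  intros Hab Hc Hd Hs.
  destruct (Req_dec a b) as [->|Hne]; [lra|].
  assert (pr1 : forall c, a < c < b -> derivable_pt F c).
  { intros c Hcc. exists (f c). apply is_derive_Reals, Hd, Hcc. }
  assert (pr2 : forall c, a < c < b -> derivable_pt id c).
  { intros c _. apply derivable_pt_id. }
  destruct (MVT F id a b pr1 pr2) as [c [P Hm]];
    [lra| exact Hc | intros c _; apply derivable_continuous_pt, derivable_pt_id |].
  assert (E2 : derive_pt id c (pr2 c P) = 1).
  { apply derive_pt_eq_0. apply derivable_pt_lim_id. }
  rewrite E2 in Hm.
  assert (E : derive_pt F c (pr1 c P) = f c).
  { apply derive_pt_eq_0. apply is_derive_Reals, Hd, P. }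
  rewrite E in Hm. unfold id in Hm. specialize (Hs c P). nra.
Qed.

Lemma RInt_exact_R (F f : R -> R) a b (v : R) : a <= b ->
  (forall x, a <= x <= b -> is_derive F x (f x)) -> Cont f -> F b - F a = v ->
  RInt f a b = v.
Proof. intros Hab HF Hf E. rewrite (RInt_exact F f a b Hab HF Hf). exact E. Qed.

Definition PsiOK (psi : R -> R) (A : R) :=
  Cont psi /\ (forall x, 0 <= psi x <= A) /\
  (forall P, 0 <= P -> exists L, 0 < L /\ forall x y, 0 <= x <= P -> 0 <= y <= P ->
      Rabs (psi x - psi y) <= L * Rabs (x - y)).

Definition g (psi u : R -> R) (t : R) := psi (u (Rabs t) / Rabs t).
Definition Ii (psi u : R -> R) (s : R) := RInt (g psi u) 0 s.
Definition T (psi : R -> R) (a : R) (u : R -> R) (r : R) :=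
  RInt (fun s => a * s * exp (- Ii psi u s)) 0 r.
Definition Good (a : R) (u : R -> R) :=
  (forall r, 0 < r -> continuity_pt u r) /\ (forall r, 0 <= r -> 0 <= u r <= a * r * r / 2).

Lemma div0 x : x / 0 = 0.
Proof. unfold Rdiv. rewrite Rinv_0. ring. Qed.

Lemma g_at0 psi u : g psi u 0 = psi 0.
Proof. unfold g. rewrite Rabs_R0, div0. reflexivity. Qed.

Lemma Good_ratio a u t : Good a u -> 0 < t -> 0 <= u t / t <= a * t / 2.
Proof.
  intros [_ Hb] Ht. destruct (Hb t (Rlt_le _ _ Ht)) as [H1 H2].
  split.
  - apply Rdiv_le_0_compat; lra.
  - apply (Rmult_le_reg_r t); [lra|]. unfold Rdiv. rewrite Rmult_assoc, Rinv_l by lra. nra.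
Qed.

Lemma g_Cont psi A a u : PsiOK psi A -> 0 <= a -> Good a u -> Cont (g psi u).
Proof.
  intros [Hc [Hb Hl]] Ha HG t.
  destruct (Req_dec t 0) as [->|Ht].
  - apply cont_intro. intros eps He.
    destruct (cont_elim psi 0 (Hc 0) eps He) as [d [Hd Hpd]].
    exists (2 * d / (a + 1)). split; [apply Rdiv_lt_0_compat; lra|].
    intros x Hx. rewrite g_at0.
    destruct (Req_dec x 0) as [->|Hx0].
    + rewrite g_at0. unfold Rminus; rewrite Rplus_opp_r, Rabs_R0; lra.
    + unfold g. apply Hpd.
      assert (Hax : 0 < Rabs x) by (apply Rabs_pos_lt; auto).
      destruct (Good_ratio a u (Rabs x) HG Hax) as [H1 H2].
      rewrite Rminus_0_r in Hx |- *. rewrite Rabs_right by lra.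
      apply Rle_lt_trans with (a * Rabs x / 2); [lra|].
      apply (Rmult_lt_compat_l (a+1)) in Hx; [|lra].
      unfold Rdiv in Hx. field_simplify in Hx; [|lra]. nra.
  - unfold g.
    assert (Hax : 0 < Rabs t) by (apply Rabs_pos_lt; auto).
    apply (continuity_pt_comp (fun t => u (Rabs t) / Rabs t) psi); [|apply Hc].
    apply (continuity_pt_div (fun t => u (Rabs t)) Rabs); [| apply Rcontinuity_abs | lra].
    apply (continuity_pt_comp Rabs u); [apply Rcontinuity_abs|]. apply (proj1 HG), Hax.
Qed.

Lemma g_bounds psi A u t : PsiOK psi A -> 0 <= g psi u t <= A.
Proof. intros [_ [Hb _]]. apply Hb. Qed.

Lemma Ii_deriv psi A a u s : PsiOK psi A -> 0 <= a -> Good a u ->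
  is_derive (Ii psi u) s (g psi u s).
Proof. intros H Ha HG. apply is_derive_RInt0. eapply g_Cont; eauto. Qed.

Lemma Ii_Cont psi A a u : PsiOK psi A -> 0 <= a -> Good a u -> Cont (Ii psi u).
Proof. intros H Ha HG. apply (derive_Cont _ (g psi u)). intros; eapply Ii_deriv; eauto. Qed.

Lemma Ii_0 psi u : Ii psi u 0 = 0.
Proof. unfold Ii. rewrite RInt_point. reflexivity. Qed.

Lemma Cont_const c : Cont (fun _ => c).
Proof. intros x. apply continuity_pt_const. intros ? ?; auto. Qed.

Lemma Ii_bounds psi A a u s : PsiOK psi A -> 0 <= a -> Good a u -> 0 <= s ->
  0 <= Ii psi u s <= A * s.
Proof.
  intros H Ha HG Hs. pose proof (g_Cont _ _ _ _ H Ha HG) as Hc. split.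
  - apply RInt_0_le; auto. intros x _. eapply g_bounds; eauto.
  - unfold Ii. replace (A * s) with (RInt (fun _ => A) 0 s).
    + apply RInt_le_Cont; auto using Cont_const. intros x _. eapply g_bounds; eauto.
    + rewrite (RInt_const (V:=R_CompleteNormedModule)). unfold scal; simpl; unfold mult; simpl. ring.
Qed.

Lemma integrand_Cont psi A a a' u : PsiOK psi A -> 0 <= a' -> Good a' u ->
  Cont (fun s => a * s * exp (- Ii psi u s)).
Proof.
  intros H Ha HG x. pose proof (Ii_Cont _ _ _ _ H Ha HG) as Hc.
  apply continuity_pt_mult.
  - apply continuity_pt_mult; [apply continuity_pt_const; intros ? ?; auto | apply continuity_pt_id].
  - apply (continuity_pt_comp (fun s => - Ii psi u s) exp).
    + apply continuity_pt_opp, Hc.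
    + apply derivable_continuous_pt, derivable_pt_exp.
Qed.

Lemma T_deriv psi A a a' u r : PsiOK psi A -> 0 <= a' -> Good a' u ->
  is_derive (T psi a u) r (a * r * exp (- Ii psi u r)).
Proof.
  intros H Ha HG. unfold T.
  apply (is_derive_RInt0 (fun s => a * s * exp (- Ii psi u s))). eapply integrand_Cont; eauto.
Qed.

Lemma T_0 psi a u : T psi a u 0 = 0.
Proof. unfold T. rewrite RInt_point. reflexivity. Qed.

Lemma T_bounds psi A a u r : PsiOK psi A -> 0 <= a -> Good a u -> 0 <= r ->
  0 <= T psi a u r <= a * r * r / 2.
Proof.
  intros H Ha HG Hr. pose proof (integrand_Cont psi A a a u H Ha HG) as Hc.
  split.
  - apply RInt_0_le; auto. intros x Hx.
    apply Rmult_le_pos; [apply Rmult_le_pos; lra| left; apply exp_pos].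
  - unfold T. replace (a * r * r / 2) with (RInt (fun s => a * s) 0 r).
    + apply RInt_le_Cont; auto.
      * intros x. apply continuity_pt_mult; [apply continuity_pt_const; intros ? ?; auto | apply continuity_pt_id].
      * intros x Hx. destruct (Ii_bounds psi A a u x H Ha HG) as [H1 _]; [lra|].
        assert (exp (- Ii psi u x) <= 1).
        { rewrite <- exp_0. destruct (Req_dec (Ii psi u x) 0) as [E|E].
          - rewrite E, Ropp_0. lra.
          - left. apply exp_increasing. lra. }
        assert (0 <= a * x) by nra. nra.
    + rewrite (RInt_exact (fun s => a * s * s / 2)).
      * simpl. field.
      * lra.
      * intros x _. auto_derive; auto. field.
      * intros x. apply continuity_pt_mult; [apply continuity_pt_const; intros ? ?; auto | apply continuity_pt_id].
Qed.

Lemma T_Good psi A a u : PsiOK psi A -> 0 <= a -> Good a u -> Good a (T psi a u).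
Proof.
  intros H Ha HG. split.
  - intros r _. eapply is_derive_cont_pt. eapply T_deriv; eauto.
  - intros r Hr. eapply T_bounds; eauto.
Qed.

Lemma exp_le1 x : 0 <= x -> exp (- x) <= 1.
Proof.
  intros Hx. rewrite <- exp_0. destruct (Req_dec x 0) as [->|E].
  - rewrite Ropp_0. lra.
  - left. apply exp_increasing. lra.
Qed.

Lemma exp_lip x y : 0 <= x -> 0 <= y -> Rabs (exp (- x) - exp (- y)) <= Rabs (x - y).
Proof.
  intros Hx Hy.
  assert (Key : forall x y, 0 <= x <= y -> exp (-x) - exp (-y) <= y - x /\ 0 <= exp (-x) - exp (-y)).
  { intros p q [Hp Hpq].
    replace (exp (-q)) with (exp (-p) * exp (-(q-p))) by (rewrite <- exp_plus; f_equal; ring).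
    pose proof (exp_ineq1_le (-(q-p))). pose proof (exp_le1 p Hp). pose proof (exp_pos (-p)).
    pose proof (exp_le1 (q - p) ltac:(lra)).
    assert (0 <= (1 - exp (-p)) * (1 - exp (-(q-p)))) by (apply Rmult_le_pos; lra).
    assert (0 <= exp (-p) * (1 - exp (-(q-p)))) by (apply Rmult_le_pos; lra).
    set (E := exp (-(q-p))) in *. set (e := exp (-p)) in *.
    split; nra. }
  destruct (Rle_dec x y) as [Hxy|Hxy].
  - destruct (Key x y (conj Hx Hxy)). rewrite Rabs_right by lra. rewrite Rabs_left1 by lra. lra.
  - apply Rnot_le_lt in Hxy. destruct (Key y x (conj Hy (Rlt_le _ _ Hxy))). rewrite Rabs_left1 by lra. rewrite Rabs_right by lra. lra.
Qed.

Definition LipOn (psi : R -> R) (P L : R) :=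
  forall x y, 0 <= x <= P -> 0 <= y <= P -> Rabs (psi x - psi y) <= L * Rabs (x - y).

Lemma g_diff psi A a a' beta R L K m u w t :
  PsiOK psi A -> LipOn psi (beta * R / 2) L -> 0 <= L -> 0 <= m ->
  0 <= a <= beta -> 0 <= a' <= beta -> Good a u -> Good a' w -> 0 <= t <= R ->
  Rabs (u t - w t) <= m * t * exp (K * t) ->
  Rabs (g psi u t - g psi w t) <= L * m * exp (K * t).
Proof.
  intros Hpsi HL HL0 Hm Ha Ha' Hu Hw Ht Hd.
  pose proof (exp_pos (K * t)).
  destruct (Req_dec t 0) as [->|Ht0].
  - rewrite !g_at0. unfold Rminus; rewrite Rplus_opp_r, Rabs_R0.
    apply Rmult_le_pos; [apply Rmult_le_pos|]; lra.
  - assert (Htp : 0 < t) by lra. unfold g. rewrite (Rabs_right t) by lra.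
    destruct (Good_ratio a u t Hu Htp). destruct (Good_ratio a' w t Hw Htp).
    eapply Rle_trans; [apply HL|].
    + split; [lra|]. apply Rle_trans with (a * t / 2); [lra|]. nra.
    + split; [lra|]. apply Rle_trans with (a' * t / 2); [lra|]. nra.
    + replace (u t / t - w t / t) with ((u t - w t) / t) by (field; lra).
      rewrite Rabs_div by lra. rewrite (Rabs_right t) by lra.
      rewrite Rmult_assoc. apply Rmult_le_compat_l; [lra|].
      apply (Rmult_le_reg_r t); [lra|]. unfold Rdiv. rewrite Rmult_assoc, Rinv_l by lra. nra.
Qed.

Lemma Cont_exp K c : Cont (fun t => c * exp (K * t)).
Proof.
  intros x. apply (derivable_continuous_pt).
  exists (c * (K * exp (K * x))). apply is_derive_Reals. auto_derive; auto. ring.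
Qed.

Lemma int_exp K c s : 0 < K -> 0 <= s ->
  RInt (fun t => c * exp (K * t)) 0 s = c * (exp (K * s) - 1) / K.
Proof.
  intros HK Hs. rewrite (RInt_exact (fun t => c * exp (K * t) / K)).
  - rewrite Rmult_0_r, exp_0. simpl. field. lra.
  - lra.
  - intros x _. auto_derive; auto. field. lra.
  - apply Cont_exp.
Qed.

Lemma I_diff psi A a a' beta R L K m u w s :
  PsiOK psi A -> LipOn psi (beta * R / 2) L -> 0 <= L -> 0 <= m -> 0 < K ->
  0 <= a <= beta -> 0 <= a' <= beta -> Good a u -> Good a' w -> 0 <= s <= R ->
  (forall t, 0 <= t <= R -> Rabs (u t - w t) <= m * t * exp (K * t)) ->
  Rabs (Ii psi u s - Ii psi w s) <= L * m * exp (K * s) / K.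
Proof.
  intros Hpsi HL HL0 Hm HK Ha Ha' Hu Hw Hs Hd.
  unfold Ii. eapply Rle_trans.
  - apply (RInt_diff_bound _ _ (fun t => (L * m) * exp (K * t))).
    + lra.
    + apply (g_Cont psi A a u); auto; lra.
    + apply (g_Cont psi A a' w); auto; lra.
    + apply Cont_exp.
    + intros x Hx. apply (g_diff psi A a a' beta R L K m u w x); auto; try lra. apply Hd; lra.
  - rewrite int_exp by lra. unfold Rdiv. apply Rmult_le_compat_r.
    + left; apply Rinv_0_lt_compat; lra.
    + assert (0 <= L * m) by (apply Rmult_le_pos; lra). nra.
Qed.

Lemma T_diff psi A a a' beta R L K m u w r :
  PsiOK psi A -> LipOn psi (beta * R / 2) L -> 0 <= L -> 0 <= m -> 0 < K ->
  2 * beta * L <= K * K ->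
  0 <= a <= beta -> 0 <= a' <= beta -> Good a u -> Good a' w -> 0 <= r <= R ->
  (forall t, 0 <= t <= R -> Rabs (u t - w t) <= m * t * exp (K * t)) ->
  Rabs (T psi a u r - T psi a' w r) <= (Rabs (a - a') * R + m / 2) * r * exp (K * r).
Proof.
  intros Hpsi HL HL0 Hm HK HKL Ha Ha' Hu Hw Hr Hd.
  set (c1 := Rabs (a - a') * r). set (c2 := beta * r * (L * m / K)).
  unfold T. eapply Rle_trans.
  - apply (RInt_diff_bound _ _ (fun s => c1 + c2 * exp (K * s))).
    + lra.
    + apply (integrand_Cont psi A a a u); auto; lra.
    + apply (integrand_Cont psi A a' a' w); auto; lra.
    + intros x. apply continuity_pt_plus; [apply Cont_const| apply Cont_exp].
    + intros s Hs.
      destruct (Ii_bounds psi A a u s Hpsi ltac:(lra) Hu ltac:(lra)).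
      destruct (Ii_bounds psi A a' w s Hpsi ltac:(lra) Hw ltac:(lra)).
      pose proof (exp_lip _ _ H H1) as Hel.
      pose proof (I_diff psi A a a' beta R L K m u w s Hpsi HL HL0 Hm HK Ha Ha' Hu Hw ltac:(lra) Hd) as HI.
      pose proof (exp_le1 _ H). pose proof (exp_pos (- Ii psi u s)).
      replace (a * s * exp (- Ii psi u s) - a' * s * exp (- Ii psi w s))
        with ((a - a') * s * exp (- Ii psi u s) + a' * s * (exp (- Ii psi u s) - exp (- Ii psi w s))) by ring.
      eapply Rle_trans; [apply Rabs_triang|].
      rewrite !Rabs_mult. rewrite (Rabs_right s) by lra. rewrite (Rabs_right (exp _)) by lra.
      rewrite (Rabs_right a') by lra.
      apply Rplus_le_compat.
      * unfold c1. pose proof (Rabs_pos (a - a')).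
        assert (0 <= Rabs (a - a') * s) by (apply Rmult_le_pos; lra).
        assert (0 <= Rabs (a - a') * s * (1 - exp (- Ii psi u s))) by (apply Rmult_le_pos; lra).
        assert (Rabs (a - a') * s <= Rabs (a - a') * r) by (apply Rmult_le_compat_l; lra).
        nra.
      * unfold c2. pose proof (Rabs_pos (exp (- Ii psi u s) - exp (- Ii psi w s))).
        assert (Rabs (exp (- Ii psi u s) - exp (- Ii psi w s)) <= L * m * exp (K * s) / K) by lra.
        assert (0 <= L * m * exp (K * s) / K).
        { unfold Rdiv. apply Rmult_le_pos; [|left; apply Rinv_0_lt_compat; lra].
          pose proof (exp_pos (K * s)). apply Rmult_le_pos; [apply Rmult_le_pos|]; lra. }
        replace (beta * r * (L * m / K) * exp (K * s)) with ((beta * r) * (L * m * exp (K * s) / K)) by (field; lra).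
        apply Rmult_le_compat; [apply Rmult_le_pos; lra | lra | apply Rmult_le_compat; lra | lra].
  - rewrite (RInt_exact (fun s => c1 * s + c2 * exp (K * s) / K)).
    2: lra.
    2:{ intros x _. auto_derive; auto. field. lra. }
    2:{ intros x. apply continuity_pt_plus; [apply Cont_const| apply Cont_exp]. }
    replace (c1 * r + c2 * exp (K * r) / K - (c1 * 0 + c2 * exp (K * 0) / K))
      with ((r - 0) * c1 + c2 * (exp (K * r) - 1) / K) by (rewrite !Rmult_0_r, exp_0; field; lra); simpl.
    pose proof (exp_pos (K * r)).
    assert (He1 : 1 <= exp (K * r)).
    { rewrite <- exp_0. destruct (Req_dec r 0) as [->|E].
      - rewrite Rmult_0_r. lra.
      - left. apply exp_increasing. nra. }
    assert (Hc1 : (r - 0) * c1 <= Rabs (a - a') * R * r * exp (K * r)).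
    { unfold c1. pose proof (Rabs_pos (a - a')).
      replace ((r - 0) * (Rabs (a - a') * r)) with ((Rabs (a-a') * r) * r) by ring.
      assert (0 <= Rabs (a - a') * r) by nra.
      assert (Rabs (a-a') * r * r <= Rabs (a-a') * R * r) by nra.
      assert (0 <= Rabs (a-a') * R * r) by nra. nra. }
    assert (Hc2 : c2 * (exp (K * r) - 1) / K <= m / 2 * r * exp (K * r)).
    { unfold c2.
      replace (beta * r * (L * m / K) * (exp (K * r) - 1) / K)
        with ((beta * L / (K * K)) * (m * r * (exp (K * r) - 1))) by (field; lra).
      assert (Hq : beta * L / (K * K) <= / 2).
      { apply (Rmult_le_reg_r (K * K)); [nra|]. unfold Rdiv.
        rewrite Rmult_assoc, Rinv_l by nra. lra. }
      assert (0 <= beta * L / (K * K)).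
      { unfold Rdiv. apply Rmult_le_pos; [nra| left; apply Rinv_0_lt_compat; nra]. }
      assert (0 <= m * r * (exp (K * r) - 1)) by (apply Rmult_le_pos; nra).
      assert (m * r * (exp (K * r) - 1) <= m * r * exp (K * r)) by nra.
      apply Rle_trans with (/2 * (m * r * exp (K * r))); [|lra].
      apply Rmult_le_compat; lra. }
    lra.
Qed.

Fixpoint pic (psi : R -> R) (a : R) (n : nat) : R -> R :=
  match n with O => fun _ => 0 | S n => T psi a (pic psi a n) end.

Lemma Good_zero a : 0 <= a -> Good a (fun _ => 0).
Proof.
  intros Ha. split.
  - intros r _. apply continuity_pt_const. intros ? ?; auto.
  - intros r Hr. split; [lra|]. assert (0 <= a * r) by nra. nra.
Qed.

Lemma pic_Good psi A a n : PsiOK psi A -> 0 <= a -> Good a (pic psi a n).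
Proof.
  intros H Ha. induction n; simpl.
  - apply Good_zero; auto.
  - apply (T_Good psi A); auto.
Qed.

Lemma exp_ge1 x : 0 <= x -> 1 <= exp x.
Proof.
  intros Hx. rewrite <- exp_0. destruct (Req_dec x 0) as [->|E]; [lra|].
  left. apply exp_increasing. lra.
Qed.

Lemma Lip_exists psi A P : PsiOK psi A -> 0 <= P -> exists L, 0 < L /\ LipOn psi P L.
Proof. intros [_ [_ H]] HP. destruct (H P HP) as [L [HL HL']]. exists L; split; auto. Qed.

Definition Kof beta L := 2 * beta * L + 1.

Lemma Kof_pos beta L : 0 <= beta -> 0 <= L -> 0 < Kof beta L /\ 2 * beta * L <= Kof beta L * Kof beta L.
Proof. intros Hb HL. unfold Kof. assert (0 <= beta * L) by nra. split; nra. Qed.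

Lemma pic_step psi A a beta R L n t :
  PsiOK psi A -> 0 < a <= beta -> 0 < R -> 0 < L -> LipOn psi (beta * R / 2) L ->
  0 <= t <= R ->
  Rabs (pic psi a (S n) t - pic psi a n t) <= (beta * R / 2) * (/2)^n * t * exp (Kof beta L * t).
Proof.
  intros H Ha HR HL HLip. destruct (Kof_pos beta L) as [HK HKL]; try lra.
  revert t. induction n; intros t Ht.
  - simpl. rewrite Rminus_0_r.
    destruct (T_bounds psi A a (fun _ => 0) t H ltac:(lra) (Good_zero a ltac:(lra)) ltac:(lra)).
    rewrite Rabs_right by lra. pose proof (exp_ge1 (Kof beta L * t) ltac:(nra)).
    assert (a * t <= beta * R) by nra.
    assert (0 <= beta * R / 2 * t) by nra.
    apply Rle_trans with (beta * R / 2 * t); [nra|]. rewrite Rmult_1_r. nra.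
  - change (pic psi a (S (S n)) t) with (T psi a (pic psi a (S n)) t).
    change (pic psi a (S n) t) with (T psi a (pic psi a n) t).
    eapply Rle_trans.
    + apply (T_diff psi A a a beta R L (Kof beta L) (beta * R / 2 * (/2)^n)).
      all: try assumption; try lra.
      all: try (apply pic_Good with A; auto; lra).
      all: try (pose proof (pow_half_pos n); apply Rmult_le_pos; [apply Rlt_le, Rdiv_lt_0_compat; nra| lra]).
      all: try (intros s Hs; apply IHn; exact Hs).
    + unfold Rminus. rewrite Rplus_opp_r, Rabs_R0. simpl. right. field.
Qed.

Lemma pic_param psi A a a' beta R L n t :
  PsiOK psi A -> 0 < a <= beta -> 0 < a' <= beta -> 0 < R -> 0 < L -> LipOn psi (beta * R / 2) L ->
  0 <= t <= R ->
  Rabs (pic psi a n t - pic psi a' n t) <= (2 * Rabs (a - a') * R) * t * exp (Kof beta L * t).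
Proof.
  intros H Ha Ha' HR HL HLip. destruct (Kof_pos beta L) as [HK HKL]; try lra.
  pose proof (Rabs_pos (a - a')).
  revert t. induction n; intros t Ht.
  - simpl. rewrite Rminus_0_r, Rabs_R0.
    pose proof (exp_pos (Kof beta L * t)).
    apply Rmult_le_pos; [|lra]. apply Rmult_le_pos; [|lra].
    apply Rmult_le_pos; [|lra]. apply Rmult_le_pos; lra.
  - simpl. eapply Rle_trans.
    + apply (T_diff psi A a a' beta R L (Kof beta L) (2 * Rabs (a - a') * R)).
      all: try assumption; try lra.
      all: try (apply pic_Good with A; auto; lra).
      all: try nra.
Qed.

Definition V (psi : R -> R) (a r : R) : R := real (Lim_seq (fun n => pic psi a n r)).

Lemma cv_from_bound (u : nat -> R) l C : (forall n, Rabs (u n - l) <= C * (/2)^n) -> Un_cv u l.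
Proof.
  intros H eps He.
  destruct (pow_half_small (eps / (Rabs C + 1))) as [N HN].
  { apply Rdiv_lt_0_compat; [lra| pose proof (Rabs_pos C); lra]. }
  exists N. intros n Hn. unfold Rdist. eapply Rle_lt_trans; [apply H|].
  specialize (HN n Hn). pose proof (pow_half_pos n). pose proof (Rabs_pos C).
  apply Rle_lt_trans with (Rabs C * (/2)^n).
  - apply Rmult_le_compat_r; [lra| apply Rle_abs].
  - apply (Rmult_lt_compat_l (Rabs C + 1)) in HN; [|lra].
    unfold Rdiv in HN. rewrite <- Rmult_assoc, (Rmult_comm _ eps), Rmult_assoc, Rinv_r in HN by lra. nra.
Qed.

Lemma cv_shift (u : nat -> R) l : Un_cv u l -> Un_cv (fun n => u (S n)) l.
Proof. intros H eps He. destruct (H eps He) as [N HN]. exists N. intros n Hn. apply HN. lia. Qed.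

Lemma le_from_half x B c : (forall n, x <= B + c * (/2)^n) -> x <= B.
Proof.
  intros H. apply Rnot_lt_le. intros Hlt.
  destruct (pow_half_small ((x - B) / (Rabs c + 1))) as [N HN].
  { apply Rdiv_lt_0_compat; [lra| pose proof (Rabs_pos c); lra]. }
  specialize (HN N (le_n N)). specialize (H N). pose proof (pow_half_pos N). pose proof (Rabs_pos c).
  assert (c * (/2)^N <= Rabs c * (/2)^N) by (apply Rmult_le_compat_r; [lra| apply Rle_abs]).
  apply (Rmult_lt_compat_l (Rabs c + 1)) in HN; [|lra].
  unfold Rdiv in HN. rewrite <- Rmult_assoc, (Rmult_comm _ (x - B)), Rmult_assoc, Rinv_r in HN by lra. nra.
Qed.

Lemma V_cv psi A a beta R L t :
  PsiOK psi A -> 0 < a <= beta -> 0 < R -> 0 < L -> LipOn psi (beta * R / 2) L ->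
  0 <= t <= R ->
  Un_cv (fun n => pic psi a n t) (V psi a t) /\
  forall n, Rabs (pic psi a n t - V psi a t) <= 2 * ((beta * R / 2) * t * exp (Kof beta L * t)) * (/2)^n.
Proof.
  intros H Ha HR HL HLip Ht.
  destruct (geom_conv (fun n => pic psi a n t) ((beta * R / 2) * t * exp (Kof beta L * t))) as [l [Hl Hb]].
  { intros n. eapply Rle_trans; [apply (pic_step psi A a beta R L n t); auto|]. right; ring. }
  assert (E : V psi a t = l).
  { unfold V. rewrite (is_lim_seq_unique _ l); [reflexivity|]. apply is_lim_seq_Reals, Hl. }
  rewrite E. split; auto.
Qed.

Lemma Lip_for psi A beta R : PsiOK psi A -> 0 < beta -> 0 < R ->
  exists L, 0 < L /\ LipOn psi (beta * R / 2) L.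
Proof. intros H Hb HR. apply (Lip_exists psi A); auto. apply Rlt_le. apply Rdiv_lt_0_compat; [nra|lra]. Qed.

Lemma V_bounds psi A a t : PsiOK psi A -> 0 < a -> 0 <= t -> 0 <= V psi a t <= a * t * t / 2.
Proof.
  intros H Ha Ht. destruct (Lip_for psi A a (t + 1) H Ha ltac:(lra)) as [L [HL HLip]].
  destruct (V_cv psi A a a (t+1) L t H ltac:(lra) ltac:(lra) HL HLip ltac:(lra)) as [Hc _].
  apply (cv_le _ _ _ _ Hc). intros n. apply (proj2 (pic_Good psi A a n H ltac:(lra))), Ht.
Qed.

Lemma V_cont psi A a t : PsiOK psi A -> 0 < a -> 0 < t -> continuity_pt (V psi a) t.
Proof.
  intros H Ha Ht. set (R := 2 * t + 1).
  destruct (Lip_for psi A a R H Ha ltac:(unfold R; lra)) as [L [HL HLip]].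
  set (C := 2 * ((a * R / 2) * R * exp (Kof a L * R))).
  assert (HC : 0 <= C).
  { assert (HR : 0 < R) by (unfold R; lra). clearbody R.
    unfold C. pose proof (exp_pos (Kof a L * R)). apply Rmult_le_pos; [lra|].
    apply Rmult_le_pos; [|lra]. apply Rmult_le_pos; [|lra]. apply Rlt_le, Rdiv_lt_0_compat; nra. }
  assert (Hu : forall n y, 0 <= y <= R -> Rabs (pic psi a n y - V psi a y) <= C * (/2)^n).
  { intros n y Hy. destruct (V_cv psi A a a R L y H ltac:(lra) ltac:(unfold R; lra) HL HLip Hy) as [_ Hb].
    eapply Rle_trans; [apply Hb|]. unfold C. apply Rmult_le_compat_r; [left; apply pow_half_pos|].
    apply Rmult_le_compat_l; [lra|]. destruct (Kof_pos a L) as [HK _]; try lra.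
    pose proof (exp_pos (Kof a L * y)).
    assert (exp (Kof a L * y) <= exp (Kof a L * R)).
    { destruct (Req_dec y R) as [->|Hne]; [lra|]. left. apply exp_increasing. apply Rmult_lt_compat_l; lra. }
    assert (0 <= a * R / 2) by (unfold R; apply Rlt_le, Rdiv_lt_0_compat; nra).
    apply Rmult_le_compat; [nra| lra | apply Rmult_le_compat_l; lra | lra]. }
  apply cont_intro. intros eps He.
  destruct (pow_half_small (eps / (3 * (C + 1)))) as [N HN].
  { apply Rdiv_lt_0_compat; lra. }
  specialize (HN N (le_n N)).
  assert (HCN : C * (/2)^N < eps / 3).
  { pose proof (pow_half_pos N). apply (Rmult_lt_compat_l (C + 1)) in HN; [|lra].
    replace ((C + 1) * (eps / (3 * (C + 1)))) with (eps / 3) in HN by (field; lra). nra. }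
  destruct (cont_elim _ _ (proj1 (pic_Good psi A a N H ltac:(lra)) t Ht) (eps / 3) ltac:(lra)) as [d [Hd Hx]].
  exists (Rmin d t). split; [apply Rmin_pos; lra|].
  intros x Hxt. assert (Hxd : Rabs (x - t) < d) by (eapply Rlt_le_trans; [exact Hxt| apply Rmin_l]).
  assert (Hxt' : Rabs (x - t) < t) by (eapply Rlt_le_trans; [exact Hxt| apply Rmin_r]).
  apply Rabs_def2 in Hxt'.
  specialize (Hx x Hxd).
  pose proof (Hu N x ltac:(unfold R; lra)). pose proof (Hu N t ltac:(unfold R; lra)).
  replace (V psi a x - V psi a t) with
    (-(pic psi a N x - V psi a x) + (pic psi a N x - pic psi a N t) + (pic psi a N t - V psi a t)) by ring.
  eapply Rle_lt_trans; [apply Rabs_triang|].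
  eapply Rle_lt_trans; [apply Rplus_le_compat_r; apply Rabs_triang|].
  rewrite Rabs_Ropp. lra.
Qed.

Lemma V_Good psi A a : PsiOK psi A -> 0 < a -> Good a (V psi a).
Proof.
  intros H Ha. split.
  - intros r Hr. apply (V_cont psi A); auto.
  - intros r Hr. apply (V_bounds psi A); auto.
Qed.

Lemma V_fix psi A a r : PsiOK psi A -> 0 < a -> 0 <= r -> T psi a (V psi a) r = V psi a r.
Proof.
  intros H Ha Hr. set (R := r + 1).
  destruct (Lip_for psi A a R H Ha ltac:(unfold R; lra)) as [L [HL HLip]].
  destruct (Kof_pos a L) as [HK HKL]; try lra.
  assert (HR : 0 < R) by (unfold R; lra).
  destruct (V_cv psi A a a R L r H ltac:(lra) HR HL HLip ltac:(unfold R; lra)) as [Hc _].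
  apply (cv_unique (fun n => pic psi a (S n) r)); [| apply (cv_shift (fun n => pic psi a n r)), Hc].
  apply (cv_from_bound _ _ ((a * R / 2) * r * exp (Kof a L * r))).
  intros n. simpl. rewrite <- Rabs_Ropp. rewrite Ropp_minus_distr.
  eapply Rle_trans.
  - apply (T_diff psi A a a a R L (Kof a L) (a * R * (/2)^n)).
    all: try assumption; try lra.
    all: try (unfold R; lra).
    all: try (pose proof (pow_half_pos n); apply Rmult_le_pos; [nra|lra]).
    all: try (apply V_Good with A; auto).
    all: try (apply pic_Good with A; auto; lra).
    all: try (intros t Ht; destruct (V_cv psi A a a R L t H ltac:(lra) HR HL HLip Ht) as [_ Hb];
      rewrite <- Rabs_Ropp, Ropp_minus_distr; eapply Rle_trans; [apply Hb|]; right; field).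
  - right. unfold Rminus. rewrite Rplus_opp_r, Rabs_R0. field.
Qed.

Lemma V_0 psi A a : PsiOK psi A -> 0 < a -> V psi a 0 = 0.
Proof. intros H Ha. destruct (V_bounds psi A a 0 H Ha ltac:(lra)). nra. Qed.

Lemma V_deriv psi A a r : PsiOK psi A -> 0 < a -> 0 < r ->
  is_derive (V psi a) r (a * r * exp (- Ii psi (V psi a) r)).
Proof.
  intros H Ha Hr. apply (is_derive_ext_loc (T psi a (V psi a))).
  - exists (mkposreal r Hr). intros y Hy. simpl in Hy. change (Rabs (y - r) < r) in Hy.
    apply Rabs_def2 in Hy. apply (V_fix psi A); auto; lra.
  - apply (T_deriv psi A a a); auto; try lra. apply V_Good with A; auto.
Qed.

Lemma V_param psi A beta R : PsiOK psi A -> 0 < beta -> 0 < R ->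
  exists C, 0 < C /\ forall a a', 0 < a <= beta -> 0 < a' <= beta ->
    Rabs (V psi a R - V psi a' R) <= C * Rabs (a - a') /\
    Rabs (a * R * exp (- Ii psi (V psi a) R) - a' * R * exp (- Ii psi (V psi a') R)) <= C * Rabs (a - a').
Proof.
  intros H Hb HR.
  destruct (Lip_for psi A beta R H Hb HR) as [L [HL HLip]].
  destruct (Kof_pos beta L) as [HK HKL]; try lra.
  pose proof (exp_pos ((Kof beta L) * R)) as HE.
  set (C1 := 2 * R * R * exp ((Kof beta L) * R)).
  set (C2 := R + beta * R * (L * (2 * R) * exp ((Kof beta L) * R) / (Kof beta L))).
  assert (HC1 : 0 < C1) by (unfold C1; apply Rmult_lt_0_compat; [nra| lra]).
  assert (HC2 : 0 < C2).
  { unfold C2. assert (0 < L * (2 * R) * exp ((Kof beta L) * R) / (Kof beta L)).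
    { apply Rdiv_lt_0_compat; [|lra]. apply Rmult_lt_0_compat; [nra|lra]. }
    assert (0 < beta * R) by nra. nra. }
  exists (C1 + C2). split; [lra|]. intros a a' Ha Ha'.
  pose proof (Rabs_pos (a - a')) as Hd.
  assert (HV : forall t, 0 <= t <= R -> Rabs (V psi a t - V psi a' t) <= (2 * Rabs (a - a') * R) * t * exp ((Kof beta L) * t)).
  { intros t Ht.
    destruct (V_cv psi A a beta R L t H Ha HR HL HLip Ht) as [_ B1].
    destruct (V_cv psi A a' beta R L t H Ha' HR HL HLip Ht) as [_ B2].
    apply (le_from_half _ _ (2 * (2 * ((beta * R / 2) * t * exp ((Kof beta L) * t))))).
    intros n. specialize (B1 n). specialize (B2 n).
    pose proof (pic_param psi A a a' beta R L n t H Ha Ha' HR HL HLip Ht).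
    replace (V psi a t - V psi a' t) with
      (-(pic psi a n t - V psi a t) + (pic psi a n t - pic psi a' n t) + (pic psi a' n t - V psi a' t)) by ring.
    eapply Rle_trans; [apply Rabs_triang|].
    eapply Rle_trans; [apply Rplus_le_compat_r; apply Rabs_triang|].
    rewrite Rabs_Ropp. lra. }
  split.
  - eapply Rle_trans; [apply HV; lra|].
    assert (2 * Rabs (a - a') * R * R * exp ((Kof beta L) * R) = C1 * Rabs (a - a')) by (unfold C1; ring).
    assert (0 <= C2 * Rabs (a - a')) by nra. lra.
  - pose proof (I_diff psi A a a' beta R L (Kof beta L) (2 * Rabs (a - a') * R) (V psi a) (V psi a') R H HLip
       ltac:(lra) ltac:(nra) HK ltac:(lra) ltac:(lra) (V_Good psi A a H ltac:(lra)) (V_Good psi A a' H ltac:(lra))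
       ltac:(lra) HV) as HI.
    destruct (Ii_bounds psi A a (V psi a) R H ltac:(lra) (V_Good psi A a H ltac:(lra)) ltac:(lra)) as [I1 _].
    destruct (Ii_bounds psi A a' (V psi a') R H ltac:(lra) (V_Good psi A a' H ltac:(lra)) ltac:(lra)) as [I2 _].
    pose proof (exp_lip _ _ I1 I2) as Hel.
    pose proof (exp_le1 _ I1). pose proof (exp_pos (- Ii psi (V psi a) R)).
    set (E1 := exp (- Ii psi (V psi a) R)) in *. set (E2 := exp (- Ii psi (V psi a') R)) in *.
    replace (a * R * E1 - a' * R * E2) with ((a - a') * R * E1 + a' * R * (E1 - E2)) by ring.
    eapply Rle_trans; [apply Rabs_triang|].
    rewrite !Rabs_mult. rewrite (Rabs_right R) by lra. rewrite (Rabs_right E1) by lra.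
    rewrite (Rabs_right a') by lra.
    set (DI := Rabs (Ii psi (V psi a) R - Ii psi (V psi a') R)) in *.
    assert (h1 : Rabs (a - a') * R * E1 <= Rabs (a - a') * R).
    { assert (0 <= Rabs (a - a') * R) by nra. nra. }
    assert (h2 : a' * R * Rabs (E1 - E2) <= beta * R * (L * (2 * Rabs (a - a') * R) * exp ((Kof beta L) * R) / (Kof beta L))).
    { pose proof (Rabs_pos (E1 - E2)).
      apply Rmult_le_compat; [nra| lra| nra| lra]. }
    assert (h3 : beta * R * (L * (2 * Rabs (a - a') * R) * exp ((Kof beta L) * R) / (Kof beta L))
                 = (beta * R * (L * (2 * R) * exp ((Kof beta L) * R) / (Kof beta L))) * Rabs (a - a')) by (field; lra).
    assert (C1 * Rabs (a - a') >= 0) by nra.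
    unfold C2. nra.
Qed.

Lemma Cont_plus f g : Cont f -> Cont g -> Cont (fun x => f x + g x).
Proof. intros Hf Hg x. apply (continuity_pt_plus f g); auto. Qed.
Lemma Cont_mult f g : Cont f -> Cont g -> Cont (fun x => f x * g x).
Proof. intros Hf Hg x. apply (continuity_pt_mult f g); auto. Qed.
Lemma Cont_id : Cont (fun x => x).
Proof. intros x. apply continuity_pt_id. Qed.
Lemma Cont_expc f : Cont f -> Cont (fun x => exp (f x)).
Proof. intros Hf x. apply (continuity_pt_comp f exp); auto. apply derivable_continuous_pt, derivable_pt_exp. Qed.
Lemma Cont_opp f : Cont f -> Cont (fun x => - f x).
Proof. intros Hf x. apply (continuity_pt_opp f); auto. Qed.

Ltac cont := repeat first
  [ apply Cont_plus | apply Cont_minus | apply Cont_mult | apply Cont_expc | apply Cont_opp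
  | apply Cont_id | apply Cont_const | assumption ].

Ltac solve_ex := repeat split; try (eexists; eassumption).


Lemma V_nonneg psi A a r : PsiOK psi A -> 0 < a -> 0 <= r -> 0 <= V psi a r.
Proof. intros H Ha Hr. apply (V_bounds psi A a r H Ha Hr). Qed.

Lemma V_mono psi A a x y : PsiOK psi A -> 0 < a -> 0 <= x <= y -> V psi a x <= V psi a y.
Proof.
  intros H Ha Hxy. destruct (Req_dec x 0) as [->|Hx].
  - rewrite (V_0 psi A a H Ha). apply V_nonneg with A; auto; lra.
  - apply (incr_from_deriv _ (fun r => a * r * exp (- Ii psi (V psi a) r))); try lra.
    + intros t Ht. apply (V_cont psi A); auto; lra.
    + intros t Ht. apply (V_deriv psi A); auto; lra.
    + intros t Ht. pose proof (exp_pos (- Ii psi (V psi a) t)). apply Rmult_le_pos; [|lra]. nra.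
Qed.

Lemma vv_Cont psi A a : PsiOK psi A -> 0 < a -> Cont (fun t => V psi a (Rabs t)).
Proof.
  intros H Ha t. destruct (Req_dec t 0) as [->|Ht].
  - apply cont_intro. intros eps He. exists (Rmin 1 (eps / (a + 1))). split.
    { apply Rmin_pos; [lra| apply Rdiv_lt_0_compat; lra]. }
    intros x Hx. rewrite Rabs_R0, (V_0 psi A a H Ha), Rminus_0_r in *.
    assert (H1 : Rabs x < 1) by (eapply Rlt_le_trans; [exact Hx| apply Rmin_l]).
    assert (H2 : Rabs x < eps / (a + 1)) by (eapply Rlt_le_trans; [exact Hx| apply Rmin_r]).
    pose proof (Rabs_pos x).
    destruct (V_bounds psi A a (Rabs x) H Ha (Rabs_pos x)).
    rewrite Rabs_right by lra.
    apply Rle_lt_trans with (a * Rabs x * Rabs x / 2); [lra|].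
    apply (Rmult_lt_compat_l (a + 1)) in H2; [|lra].
    replace ((a + 1) * (eps / (a + 1))) with eps in H2 by (field; lra).
    assert (a * Rabs x * Rabs x <= a * Rabs x) by (assert (0 <= a * Rabs x) by nra; nra).
    nra.
  - apply (continuity_pt_comp Rabs (V psi a)); [apply Rcontinuity_abs|].
    apply (V_cont psi A); auto. apply Rabs_pos_lt; auto.
Qed.

Lemma vv_deriv psi A a t : PsiOK psi A -> 0 < a -> 0 < t ->
  is_derive (fun t => V psi a (Rabs t)) t (a * t * exp (- Ii psi (V psi a) t)).
Proof.
  intros H Ha Ht. apply (is_derive_ext_loc (V psi a)).
  - exists (mkposreal t Ht). intros y Hy. change (Rabs (y - t) < t) in Hy.
    apply Rabs_def2 in Hy. rewrite Rabs_right by lra. reflexivity.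
  - apply (V_deriv psi A); auto.
Qed.

Lemma I_deriv_pos psi A a s : PsiOK psi A -> 0 < a -> 0 < s ->
  is_derive (Ii psi (V psi a)) s (psi (V psi a s / s)).
Proof.
  intros H Ha Hs. pose proof (Ii_deriv psi A a (V psi a) s H ltac:(lra) (V_Good psi A a H Ha)) as D.
  unfold g in D. rewrite Rabs_right in D by lra. exact D.
Qed.

Lemma I_Cont psi A a : PsiOK psi A -> 0 < a -> Cont (Ii psi (V psi a)).
Proof. intros H Ha. apply (Ii_Cont psi A a); auto; [lra| apply (V_Good psi A); auto]. Qed.

Lemma small_a psi A phi0 b : PsiOK psi A -> 0 < phi0 ->
  (forall c, c < phi0 -> exists d, 0 < d /\ forall p, 0 <= p <= d -> c * p <= psi p) ->
  4 / phi0 < b -> exists a, 0 < a /\ forall r, 0 <= r -> V psi a r < b.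
Proof.
  intros H Hphi Q2 Hb.
  assert (Hb0 : 0 < b) by (apply Rlt_trans with (4 / phi0); [apply Rdiv_lt_0_compat|]; lra).
  assert (H4 : 4 < phi0 * b).
  { apply (Rmult_lt_compat_l phi0) in Hb; [|lra]. unfold Rdiv in Hb.
    rewrite <- Rmult_assoc, (Rmult_comm phi0 4), Rmult_assoc, Rinv_r in Hb by lra. lra. }
  set (c := (phi0 + 4 / b) / 2).
  assert (Hcb : 4 < c * b).
  { unfold c. replace ((phi0 + 4 / b) / 2 * b) with ((phi0 * b + 4) / 2) by (field; lra). lra. }
  assert (Hc : c < phi0).
  { unfold c. assert (4 / b < phi0).
    { apply (Rmult_lt_reg_r b); [lra|]. unfold Rdiv. rewrite Rmult_assoc, Rinv_l by lra. lra. }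
    lra. }
  destruct (Q2 c Hc) as [d [Hd Hpd]].
  set (a := 2 * d * d / b).
  assert (Ha : 0 < a) by (unfold a; apply Rdiv_lt_0_compat; nra).
  exists a. split; auto. intros r Hr. apply Rnot_le_lt. intros Hge.
  assert (Hr1 : exists r1, 0 < r1 /\ V psi a r1 = b).
  { destruct (Req_dec (V psi a r) b) as [E|E].
    - exists r. split; auto. destruct (Req_dec r 0) as [->|Hr0]; [|lra].
      rewrite (V_0 psi A a H Ha) in E. lra.
    - assert (Hr0 : 0 < r).
      { destruct (Req_dec r 0) as [->|Hr0]; [|lra]. rewrite (V_0 psi A a H Ha) in Hge. lra. }
      destruct (IVT (fun t => V psi a (Rabs t) - b) 0 r) as [z [Hz Ez]].
      + intros t. apply (continuity_pt_minus (fun t => V psi a (Rabs t)) (fun _ => b)).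
        * apply (vv_Cont psi A a H Ha).
        * apply continuity_pt_const; intros ? ?; auto.
      + exact Hr0.
      + rewrite Rabs_R0, (V_0 psi A a H Ha). lra.
      + rewrite Rabs_right by lra. lra.
      + rewrite Rabs_right in Ez by lra. exists z. split; [|lra].
        destruct (Req_dec z 0) as [->|Hz0]; [|lra]. rewrite (V_0 psi A a H Ha) in Ez. lra. }
  destruct Hr1 as [r1 [Hr1 Er1]].
  assert (Hratio : forall t, 0 < t <= r1 -> 0 <= V psi a t / t <= d).
  { intros t Ht. assert (Hvt : V psi a t <= b) by (rewrite <- Er1; apply (V_mono psi A); auto; lra).
    destruct (Good_ratio a (V psi a) t (V_Good psi A a H Ha) ltac:(lra)) as [G1 G2].
    split; auto.
    destruct (Rle_dec t (b / d)) as [Htb|Htb].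
    - apply Rle_trans with (a * t / 2); auto.
      unfold a. apply (Rmult_le_reg_r b); [lra|].
      replace (2 * d * d / b * t / 2 * b) with (d * d * t) by (field; lra).
      apply (Rmult_le_compat_l d) in Htb; [|lra].
      replace (d * (b / d)) with b in Htb by (field; lra). nra.
    - apply Rnot_le_lt in Htb.
      apply (Rmult_le_reg_r t); [lra|]. unfold Rdiv at 1. rewrite Rmult_assoc, Rinv_l by lra.
      rewrite Rmult_1_r. apply Rle_trans with b; auto.
      apply (Rmult_lt_compat_l d) in Htb; [|lra].
      replace (d * (b / d)) with b in Htb by (field; lra). lra. }
  set (w := fun t => V psi a (Rabs t)).
  set (I := Ii psi (V psi a)).
  set (c2 := c / 2).
  set (h := fun t => a * t * t * exp (- I t) - 2 * w t + c2 * (w t)^2).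
  assert (Hh : - h 0 <= - h r1).
  { apply (incr_from_deriv (fun t => - h t)
      (fun t => - (a * t * exp (- I t) * (c * V psi a t - t * psi (V psi a t / t))))); try lra.
    - intros t _. apply Cont_opp. unfold h. pose proof (vv_Cont psi A a H Ha) as Cw. fold w in Cw.
      pose proof (I_Cont psi A a H Ha) as CI. fold I in CI.
      unfold pow. cont.
    - intros t Ht.
      pose proof (vv_deriv psi A a t H Ha ltac:(lra)) as Dw. fold w I in Dw.
      pose proof (I_deriv_pos psi A a t H Ha ltac:(lra)) as DI. fold I in DI.
      unfold h. auto_derive.
      + solve_ex.
      + replace (Derive (fun x => w x) t) with (a * t * exp (- I t)) by (symmetry; apply is_derive_unique; exact Dw).
        replace (Derive (fun x => I x) t) with (psi (V psi a t / t)) by (symmetry; apply is_derive_unique; exact DI).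
        unfold w. rewrite Rabs_right by lra. unfold c2. field.
    - intros t Ht. destruct (Hratio t ltac:(lra)) as [R1 R2].
      specialize (Hpd _ (conj R1 R2)).
      assert (t * (c * (V psi a t / t)) <= t * psi (V psi a t / t)) by (apply Rmult_le_compat_l; lra).
      replace (t * (c * (V psi a t / t))) with (c * V psi a t) in H0 by (field; lra).
      pose proof (exp_pos (- I t)).
      assert (0 <= a * t * exp (- I t)) by (apply Rmult_le_pos; [nra|lra]).
      nra. }
  unfold h, w in Hh. rewrite Rabs_R0, (V_0 psi A a H Ha) in Hh. rewrite (Rabs_right r1) in Hh by lra.
  rewrite Er1 in Hh.
  pose proof (exp_pos (- I r1)).
  assert (0 < a * r1 * r1 * exp (- I r1)) by (apply Rmult_lt_0_compat; [apply Rmult_lt_0_compat; [apply Rmult_lt_0_compat|]|]; lra).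
  unfold c2 in Hh. simpl in Hh.
  assert (0 < b * (c * b - 4)) by (apply Rmult_lt_0_compat; lra).
  rewrite !Rmult_0_l, !Rmult_0_r in Hh. nra.
Qed.

Lemma log_growth (F f : R -> R) R0 th M : 0 < R0 -> 0 < th ->
  (forall t, R0 <= t -> is_derive F t (f t)) ->
  (forall t, R0 <= t -> th / t <= f t) -> exists t, R0 <= t /\ M < F t.
Proof.
  intros HR Hth HD Hf.
  set (t := R0 * exp (Rabs (M - F R0) / th + 1)).
  assert (Ht1 : 1 <= exp (Rabs (M - F R0) / th + 1)).
  { apply exp_ge1. pose proof (Rabs_pos (M - F R0)).
    assert (0 <= Rabs (M - F R0) / th) by (apply Rdiv_le_0_compat; lra). lra. }
  assert (Ht : R0 <= t) by (unfold t; nra).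
  exists t. split; auto.
  assert (HG : F R0 - th * ln R0 <= F t - th * ln t).
  { apply (incr_from_deriv (fun t => F t - th * ln t) (fun t => f t - th / t)); auto.
    - intros x Hx. apply (is_derive_cont_pt _ _ (f x - th / x)).
      apply (is_derive_minus F (fun t => th * ln t)) with (df := f x) (dg := th / x) .
      + apply HD; lra.
      + auto_derive; [lra| field; lra].
    - intros x Hx. apply (is_derive_minus F (fun t => th * ln t)).
      + apply HD; lra.
      + auto_derive; [lra| field; lra].
    - intros x Hx. specialize (Hf x ltac:(lra)). lra. }
  assert (Hln : ln t = ln R0 + (Rabs (M - F R0) / th + 1)).
  { unfold t. rewrite ln_mult, ln_exp; auto; apply exp_pos. }
  rewrite Hln in HG.
  assert (th * (Rabs (M - F R0) / th) = Rabs (M - F R0)) by (field; lra).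
  pose proof (Rle_abs (M - F R0)). nra.
Qed.

Lemma large_a psi A b : PsiOK psi A -> 0 < A ->
  exists ahi, 0 < ahi /\ forall a, ahi <= a -> b < V psi a (/ A).
Proof.
  intros H HA. set (r := / A).
  assert (Hr : 0 < r) by (unfold r; apply Rinv_0_lt_compat; lra).
  exists (2 * A * A * (Rabs b + 1) * exp 1). split.
  { pose proof (exp_pos 1). pose proof (Rabs_pos b).
    apply Rmult_lt_0_compat; [|lra]. apply Rmult_lt_0_compat; [|lra]. nra. }
  intros a Ha.
  assert (Ha0 : 0 < a).
  { eapply Rlt_le_trans; [|exact Ha]. pose proof (exp_pos 1). pose proof (Rabs_pos b).
    apply Rmult_lt_0_compat; [|lra]. apply Rmult_lt_0_compat; [|lra]. nra. }
  rewrite <- (V_fix psi A a r H Ha0 ltac:(lra)). unfold T.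
  assert (HGd := V_Good psi A a H Ha0).
  assert (Hlow : RInt (fun s => (a * exp (- A * r)) * s) 0 r <= RInt (fun s => a * s * exp (- Ii psi (V psi a) s)) 0 r).
  { apply RInt_le_Cont; [lra| cont | apply (integrand_Cont psi A a a); auto; lra |].
    intros s Hs. destruct (Ii_bounds psi A a (V psi a) s H ltac:(lra) HGd ltac:(lra)) as [_ HI].
    assert (exp (- A * r) <= exp (- Ii psi (V psi a) s)).
    { destruct (Req_dec (- A * r) (- Ii psi (V psi a) s)) as [E|E]; [rewrite E; lra|].
      left. apply exp_increasing. assert (A * s <= A * r) by (apply Rmult_le_compat_l; lra). lra. }
    pose proof (exp_pos (- A * r)). assert (0 <= a * s) by nra. nra. }
  assert (Hval : RInt (fun s => (a * exp (- A * r)) * s) 0 r = a * exp (- A * r) * r * r / 2).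
  { apply (RInt_exact_R (fun s => a * exp (- A * r) * s * s / 2)); [lra | | cont | field].
    intros x _. auto_derive; auto. field. }
  assert (Ar : A * r = 1) by (unfold r; field; lra).
  replace (- A * r) with (- 1) in * by lra.
  assert (E1 : exp (-1) * exp 1 = 1) by (rewrite <- exp_plus; replace (-1 + 1) with 0 by ring; apply exp_0).
  assert (Hrr : r * r * (A * A) = 1) by nra.
  assert (b < a * exp (-1) * r * r / 2).
  { apply Rlt_le_trans with ((2 * A * A * (Rabs b + 1) * exp 1) * exp (-1) * r * r / 2).
    - replace ((2 * A * A * (Rabs b + 1) * exp 1) * exp (-1) * r * r / 2)
        with ((Rabs b + 1) * (exp (-1) * exp 1) * (r * r * (A * A))) by field.
      rewrite E1, Hrr. pose proof (Rle_abs b). lra.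
    - pose proof (exp_pos (-1)). assert (0 <= exp (-1) * r * r / 2).
      { apply Rmult_le_pos; [|lra]. apply Rmult_le_pos; [|lra]. apply Rmult_le_pos; lra. }
      replace (2 * A * A * (Rabs b + 1) * exp 1 * exp (-1) * r * r / 2)
        with ((2 * A * A * (Rabs b + 1) * exp 1) * (exp (-1) * r * r / 2)) by field.
      replace (a * exp (-1) * r * r / 2) with (a * (exp (-1) * r * r / 2)) by field.
      apply Rmult_le_compat_r; lra. }
  lra.
Qed.

Lemma exp_ratio RR t : 0 < RR -> 0 < t -> exp (ln RR - ln t) = RR / t.
Proof.
  intros HR Ht. unfold Rminus. rewrite exp_plus, exp_Ropp, !exp_ln by lra. reflexivity.
Qed.

Lemma B1 psi A phi0 a bnd : PsiOK psi A -> 0 < a -> 0 < phi0 ->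
  (forall p, 0 <= p -> psi p <= phi0 * p) ->
  (forall r, 0 <= r -> V psi a r <= bnd) ->
  exists R1, 1 <= R1 /\ 2 < phi0 * V psi a R1.
Proof.
  intros H Ha Hphi Q1 Hb.
  destruct (Classical_Prop.classic (exists R1, 1 <= R1 /\ 2 < phi0 * V psi a R1)) as [E|NE]; auto.
  exfalso.
  assert (HN : forall t, 1 <= t -> phi0 * V psi a t <= 2).
  { intros t Ht. apply Rnot_lt_le. intros Hlt. apply NE. exists t. auto. }
  set (Iv := Ii psi (V psi a)).
  assert (HI : forall t, 1 <= t -> Iv t <= Iv 1 + 2 * ln t).
  { intros t Ht.
    assert (2 * ln 1 - Iv 1 <= 2 * ln t - Iv t).
    { apply (incr_from_deriv (fun t => 2 * ln t - Iv t) (fun t => 2 / t - psi (V psi a t / t))); auto.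
      - intros x Hx. apply (is_derive_cont_pt _ _ (2 / x - psi (V psi a x / x))).
        apply (is_derive_minus (fun t => 2 * ln t) Iv).
        + auto_derive; [lra| field; lra].
        + apply (I_deriv_pos psi A); auto; lra.
      - intros x Hx. apply (is_derive_minus (fun t => 2 * ln t) Iv).
        + auto_derive; [lra| field; lra].
        + apply (I_deriv_pos psi A); auto; lra.
      - intros x Hx.
        assert (Hr : 0 <= V psi a x / x) by (apply Rdiv_le_0_compat; [apply V_nonneg with A|]; auto; lra).
        pose proof (Q1 _ Hr). specialize (HN x ltac:(lra)).
        assert (phi0 * (V psi a x / x) <= 2 / x).
        { unfold Rdiv. rewrite <- Rmult_assoc. apply Rmult_le_compat_r; [left; apply Rinv_0_lt_compat; lra| lra]. }
        lra. }
    rewrite ln_1 in H0. lra. }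
  destruct (log_growth (V psi a) (fun t => a * t * exp (- Iv t)) 1 (a * exp (- Iv 1)) bnd) as [t [Ht Hbig]].
  - lra.
  - pose proof (exp_pos (- Iv 1)). nra.
  - intros t Ht. apply (V_deriv psi A); auto; lra.
  - intros t Ht. specialize (HI t Ht).
    assert (exp (- Iv 1 - 2 * ln t) <= exp (- Iv t)).
    { destruct (Req_dec (- Iv 1 - 2 * ln t) (- Iv t)) as [E|E]; [rewrite E; lra|].
      left; apply exp_increasing; lra. }
    assert (Ee : exp (- Iv 1 - 2 * ln t) = exp (- Iv 1) / (t * t)).
    { replace (- Iv 1 - 2 * ln t) with (- Iv 1 + - (ln t + ln t)) by ring.
      rewrite exp_plus. rewrite (exp_Ropp (ln t + ln t)). rewrite exp_plus, exp_ln by lra. reflexivity. }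
    rewrite Ee in H0.
    replace (a * exp (- Iv 1) / t) with (a * t * (exp (- Iv 1) / (t * t))) by (field; lra).
    apply Rmult_le_compat_l; [nra| exact H0].
  - specialize (Hb t ltac:(lra)). lra.
Qed.

Lemma B2 psi A a bnd th R2 : PsiOK psi A -> 0 < a -> 0 < th -> 0 < R2 ->
  (forall r, 0 <= r -> V psi a r <= bnd) ->
  exists RR, R2 <= RR /\ a * RR * RR * exp (- Ii psi (V psi a) RR) <= th.
Proof.
  intros H Ha Hth HR2 Hb.
  destruct (Classical_Prop.classic (exists RR, R2 <= RR /\ a * RR * RR * exp (- Ii psi (V psi a) RR) <= th)) as [E|NE]; auto.
  exfalso.
  destruct (log_growth (V psi a) (fun t => a * t * exp (- Ii psi (V psi a) t)) R2 th bnd) as [t [Ht Hbig]]; auto.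
  - intros t Ht. apply (V_deriv psi A); auto; lra.
  - intros t Ht. apply Rnot_lt_le. intros Hlt. apply NE. exists t. split; auto.
    apply (Rmult_lt_compat_r t) in Hlt; [|lra].
    replace (th / t * t) with th in Hlt by (field; lra).
    replace (a * t * t * exp (- Ii psi (V psi a) t)) with (a * t * exp (- Ii psi (V psi a) t) * t) by ring.
    lra.
  - specialize (Hb t ltac:(lra)). lra.
Qed.

Lemma tail psi A a RR kap c' d b r2 : PsiOK psi A -> 0 < a -> 0 < RR -> 2 < kap -> 0 < c' ->
  (forall p, 0 <= p <= d -> c' * p <= psi p) -> b / RR <= d -> kap <= c' * V psi a RR ->
  RR <= r2 -> V psi a r2 <= b ->
  V psi a r2 <= V psi a RR + a * RR * RR * exp (- Ii psi (V psi a) RR) / (kap - 2).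
Proof.
  intros H Ha HR Hk Hc Q2 Hbd Hkap Hr2 Hvb.
  set (Iv := Ii psi (V psi a)) in *.
  assert (Hpsi : forall t, RR <= t <= r2 -> kap / t <= psi (V psi a t / t)).
  { intros t Ht.
    assert (V1 : V psi a t <= b) by (apply Rle_trans with (V psi a r2); [apply (V_mono psi A); auto; lra| exact Hvb]).
    assert (V2 : V psi a RR <= V psi a t) by (apply (V_mono psi A); auto; lra).
    assert (V0 : 0 <= V psi a RR) by (apply V_nonneg with A; auto; lra).
    assert (Hp1 : 0 <= V psi a t / t) by (apply Rdiv_le_0_compat; lra).
    assert (Hp2 : V psi a t / t <= d).
    { apply Rle_trans with (b / RR); auto.
      apply Rle_trans with (b / t).
      - unfold Rdiv. apply Rmult_le_compat_r; [left; apply Rinv_0_lt_compat; lra| lra].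
      - unfold Rdiv. apply Rmult_le_compat_l; [lra|]. apply Rinv_le_contravar; lra. }
    specialize (Q2 _ (conj Hp1 Hp2)).
    apply Rle_trans with (c' * (V psi a t / t)); auto.
    unfold Rdiv. rewrite <- Rmult_assoc. apply Rmult_le_compat_r; [left; apply Rinv_0_lt_compat; lra|].
    apply Rle_trans with (c' * V psi a RR); auto. apply Rmult_le_compat_l; lra. }
  assert (HI : forall t, RR <= t <= r2 -> Iv RR + kap * (ln t - ln RR) <= Iv t).
  { intros t Ht.
    assert (Iv RR - kap * ln RR <= Iv t - kap * ln t).
    { apply (incr_from_deriv (fun t => Iv t - kap * ln t) (fun t => psi (V psi a t / t) - kap / t)); try lra.
      - intros x Hx. apply (is_derive_cont_pt _ _ (psi (V psi a x / x) - kap / x)).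
        apply (is_derive_minus Iv (fun t => kap * ln t)).
        + apply (I_deriv_pos psi A); auto; lra.
        + auto_derive; [lra| field; lra].
      - intros x Hx. apply (is_derive_minus Iv (fun t => kap * ln t)).
        + apply (I_deriv_pos psi A); auto; lra.
        + auto_derive; [lra| field; lra].
      - intros x Hx. specialize (Hpsi x ltac:(lra)). lra. }
    lra. }
  set (D := a * RR * RR * exp (- Iv RR)).
  assert (HD : 0 <= D) by (unfold D; pose proof (exp_pos (- Iv RR)); apply Rmult_le_pos; [|lra]; nra).
  set (G := fun t => V psi a t + D / (kap - 2) * exp ((kap - 2) * (ln RR - ln t))).
  assert (HG : - G RR <= - G r2).
  { apply (incr_from_deriv (fun t => - G t)
      (fun t => - (a * t * exp (- Iv t)) + D * exp ((kap - 2) * (ln RR - ln t)) / t)); try lra.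
    - intros x Hx. unfold G.
      apply (is_derive_cont_pt _ _ (- (a * x * exp (- Iv x) + D / (kap - 2) * (exp ((kap - 2) * (ln RR - ln x)) * ((kap - 2) * (- / x)))))).
      apply (is_derive_opp (fun t => V psi a t + D / (kap - 2) * exp ((kap - 2) * (ln RR - ln t)))).
      apply (is_derive_plus (V psi a) (fun t => D / (kap - 2) * exp ((kap - 2) * (ln RR - ln t)))).
      + apply (V_deriv psi A); auto; lra.
      + auto_derive; [lra| replace (ln RR + - ln x) with (ln RR - ln x) by ring; field; lra].
    - intros x Hx. unfold G.
      apply (is_derive_ext (fun t => - (V psi a t + D / (kap - 2) * exp ((kap - 2) * (ln RR - ln t))))); [reflexivity|].
      replace (- (a * x * exp (- Iv x)) + D * exp ((kap - 2) * (ln RR - ln x)) / x)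
        with (- (a * x * exp (- Iv x) + D / (kap - 2) * (exp ((kap - 2) * (ln RR - ln x)) * ((kap - 2) * (- / x))))) by (field; lra).
      apply (is_derive_opp (fun t => V psi a t + D / (kap - 2) * exp ((kap - 2) * (ln RR - ln t)))).
      apply (is_derive_plus (V psi a) (fun t => D / (kap - 2) * exp ((kap - 2) * (ln RR - ln t)))).
      + apply (V_deriv psi A); auto; lra.
      + auto_derive; [lra| replace (ln RR + - ln x) with (ln RR - ln x) by ring; field; lra].
    - intros t Ht. specialize (HI t ltac:(lra)).
      set (u := ln RR - ln t).
      assert (Hu : exp u = RR / t) by (apply exp_ratio; lra).
      assert (E1 : exp (- Iv t) <= exp (- Iv RR) * exp (kap * u)).
      { rewrite <- exp_plus. unfold u.
        destruct (Req_dec (- Iv t) (- Iv RR + kap * (ln RR - ln t))) as [E|E]; [rewrite E; lra|].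
        left; apply exp_increasing; lra. }
      assert (E2 : t * exp (kap * u) = RR * RR * exp ((kap - 2) * u) / t).
      { replace (kap * u) with ((kap - 2) * u + (u + u)) by ring.
        rewrite !exp_plus, Hu. field. lra. }
      assert (a * t * exp (- Iv t) <= a * t * (exp (- Iv RR) * exp (kap * u))).
      { apply Rmult_le_compat_l; [nra| exact E1]. }
      assert (a * t * (exp (- Iv RR) * exp (kap * u)) = D * exp ((kap - 2) * u) / t).
      { unfold D. replace (a * t * (exp (- Iv RR) * exp (kap * u))) with (a * exp (- Iv RR) * (t * exp (kap * u))) by ring.
        rewrite E2. field. lra. }
      lra. }
  unfold G in HG. rewrite Rminus_diag, Rmult_0_r, exp_0 in HG.
  assert (0 <= D / (kap - 2) * exp ((kap - 2) * (ln RR - ln r2))).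
  { apply Rmult_le_pos; [apply Rdiv_le_0_compat; lra| left; apply exp_pos]. }
  unfold D in *. unfold Rdiv in *. lra.
Qed.

Lemma hit psi A a x y b : PsiOK psi A -> 0 < a -> 0 <= x <= y ->
  V psi a x < b <= V psi a y -> exists z, x <= z <= y /\ V psi a z = b.
Proof.
  intros H Ha Hxy [H1 H2].
  destruct (Req_dec (V psi a y) b) as [E|E]; [exists y; split; [lra|auto]|].
  assert (Hlt : x < y) by (destruct (Req_dec x y) as [->|]; lra).
  destruct (IVT (fun t => V psi a (Rabs t) - b) x y) as [z [Hz Ez]].
  - intros t. apply (continuity_pt_minus (fun t => V psi a (Rabs t)) (fun _ => b)).
    + apply (vv_Cont psi A a H Ha).
    + apply continuity_pt_const; intros ? ?; auto.
  - exact Hlt.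
  - rewrite Rabs_right by lra. lra.
  - rewrite Rabs_right by lra. lra.
  - rewrite Rabs_right in Ez by lra. exists z. split; [lra|lra].
Qed.

Lemma main_exists psi A phi0 b : PsiOK psi A -> 0 < A -> 0 < phi0 ->
  (forall p, 0 <= p -> psi p <= phi0 * p) ->
  (forall c, c < phi0 -> exists d, 0 < d /\ forall p, 0 <= p <= d -> c * p <= psi p) ->
  4 / phi0 < b ->
  exists a, 0 < a /\ (forall r, 0 <= r -> V psi a r <= b) /\
    (forall eps, 0 < eps -> exists r, 0 <= r /\ b - eps < V psi a r).
Proof.
  intros H HA Hphi Q1 Q2 Hb.
  assert (Hb0 : 0 < b) by (apply Rlt_trans with (4 / phi0); [apply Rdiv_lt_0_compat|]; lra).
  destruct (small_a psi A phi0 b H Hphi Q2 Hb) as [a0 [Ha0 Hsmall]].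
  destruct (large_a psi A b H HA) as [ahi [Hahi Hlarge]].
  set (S := fun a => 0 < a /\ forall r, 0 <= r -> V psi a r < b).
  assert (HSb : forall a, S a -> a < ahi).
  { intros a [Ha Hr]. apply Rnot_le_lt. intros Hle. specialize (Hlarge a Hle).
    specialize (Hr (/ A) ltac:(left; apply Rinv_0_lt_compat; lra)). lra. }
  destruct (completeness S) as [as_ [Hub Hlub]].
  { exists ahi. intros x Hx. left. apply (HSb x Hx). }
  { exists a0. split; auto. }
  assert (Has0 : a0 <= as_) by (apply Hub; split; auto).
  assert (Hash : as_ <= ahi) by (apply Hlub; intros x Hx; left; apply (HSb x Hx)).
  set (beta := ahi + 1).
  assert (Happrox : forall eta, 0 < eta -> exists a, S a /\ as_ - eta < a /\ a <= as_).
  { intros eta He. destruct (Classical_Prop.classic (exists a, S a /\ as_ - eta < a /\ a <= as_)) as [E|NE]; auto.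
    exfalso. assert (Hu : is_upper_bound S (as_ - eta)).
    { intros x Hx. apply Rnot_lt_le. intros Hlt. apply NE. exists x. split; [exact Hx| split; [exact Hlt| apply Hub; exact Hx]]. }
    specialize (Hlub _ Hu). lra. }
  assert (HA_ : forall r, 0 <= r -> V psi as_ r <= b).
  { intros r Hr. apply Rnot_lt_le. intros Hgt.
    assert (Hr0 : 0 < r).
    { destruct (Req_dec r 0) as [->|]; [|lra]. rewrite (V_0 psi A as_ H ltac:(lra)) in Hgt. lra. }
    destruct (V_param psi A beta r H ltac:(unfold beta; lra) Hr0) as [C [HC Hpar]].
    destruct (Happrox ((V psi as_ r - b) / C)) as [a [[Ha HSa] [Ha1 Ha2]]].
    { apply Rdiv_lt_0_compat; lra. }
    destruct (Hpar a as_ ltac:(unfold beta; lra) ltac:(unfold beta; lra)) as [P1 _].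
    specialize (HSa r Hr).
    assert (C * Rabs (a - as_) < V psi as_ r - b).
    { rewrite Rabs_left1 by lra.
      apply (Rmult_lt_compat_l C) in Ha1; [|lra].
      replace (C * (as_ - (V psi as_ r - b) / C)) with (C * as_ - (V psi as_ r - b)) in Ha1 by (field; lra).
      lra. }
    rewrite <- Rabs_Ropp, Ropp_minus_distr in P1. pose proof (Rle_abs (V psi as_ r - V psi a r)). lra. }
  exists as_. split; [lra|]. split; [exact HA_|].
  intros eps Heps.
  destruct (Classical_Prop.classic (exists r, 0 <= r /\ b - eps < V psi as_ r)) as [E|NE]; auto.
  exfalso.
  assert (Hbnd : forall r, 0 <= r -> V psi as_ r <= b - eps).
  { intros r Hr. apply Rnot_lt_le. intros Hlt. apply NE. exists r. split; auto. }
  assert (Has : 0 < as_) by lra.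
  destruct (B1 psi A phi0 as_ (b - eps) H Has Hphi Q1 Hbnd) as [R1 [HR1 Hq]].
  set (v1 := V psi as_ R1) in *.
  assert (Hv1 : 0 < v1).
  { destruct (Rle_dec v1 0) as [Hle|]; [|lra]. assert (phi0 * v1 <= 0) by nra. lra. }
  set (q := phi0 * v1) in *.
  set (kap := (q + 2) / 2).
  set (c' := kap / v1).
  assert (Hc' : c' < phi0).
  { unfold c'. apply (Rmult_lt_reg_r v1); [lra|]. unfold Rdiv. rewrite Rmult_assoc, Rinv_l by lra.
    unfold kap. fold q. lra. }
  assert (Hc'0 : 0 < c') by (unfold c', kap; apply Rdiv_lt_0_compat; lra).
  assert (Hkapv : c' * v1 = kap) by (unfold c'; field; lra).
  destruct (Q2 c' Hc') as [d [Hd Hpd]].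
  set (kap2 := (kap + 2) / 2).
  assert (Hk2 : 2 < kap2) by (unfold kap2, kap; lra).
  set (R2 := Rmax R1 (b / d)).
  assert (HR2 : 1 <= R2) by (unfold R2; eapply Rle_trans; [exact HR1| apply Rmax_l]).
  set (th := eps * (kap2 - 2) / 4).
  assert (Hth : 0 < th) by (unfold th; apply Rdiv_lt_0_compat; [nra| lra]).
  destruct (B2 psi A as_ (b - eps) th R2 H Has Hth ltac:(lra) Hbnd) as [R [HR HRth]].
  assert (HR0 : 0 < R) by lra.
  destruct (V_param psi A beta R H ltac:(unfold beta; lra) HR0) as [C [HC Hpar]].
  set (eta := Rmin 1 (Rmin (eps / (4 * C)) (Rmin (eps * (kap2 - 2) / (4 * (R * C))) ((kap - 2) / (2 * (c' * C)))))).
  assert (Heta0 : 0 < eta).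
  { assert (0 < kap - 2) by (unfold kap; lra).
    unfold eta. repeat apply Rmin_pos; try lra; apply Rdiv_lt_0_compat; try nra.
    all: try (apply Rmult_lt_0_compat; [lra| nra]).
    all: apply Rmult_lt_0_compat; [lra| apply Rmult_lt_0_compat; lra]. }
  assert (He1 : eta <= 1) by (unfold eta; apply Rmin_l).
  assert (He2 : eta <= eps / (4 * C)) by (unfold eta; eapply Rle_trans; [apply Rmin_r| apply Rmin_l]).
  assert (He3 : eta <= eps * (kap2 - 2) / (4 * (R * C))).
  { unfold eta. eapply Rle_trans; [apply Rmin_r|]. eapply Rle_trans; [apply Rmin_r| apply Rmin_l]. }
  assert (He4 : eta <= (kap - 2) / (2 * (c' * C))).
  { unfold eta. eapply Rle_trans; [apply Rmin_r|]. eapply Rle_trans; [apply Rmin_r| apply Rmin_r]. }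
  assert (HCe2 : C * eta <= eps / 4).
  { apply (Rmult_le_compat_l C) in He2; [|lra]. replace (C * (eps / (4 * C))) with (eps / 4) in He2 by (field; lra). lra. }
  assert (HCe3 : R * C * eta <= eps * (kap2 - 2) / 4).
  { apply (Rmult_le_compat_l (R * C)) in He3; [|nra].
    replace (R * C * (eps * (kap2 - 2) / (4 * (R * C)))) with (eps * (kap2 - 2) / 4) in He3 by (field; nra). lra. }
  assert (HCe4 : c' * C * eta <= (kap - 2) / 2).
  { apply (Rmult_le_compat_l (c' * C)) in He4; [|nra].
    replace (c' * C * ((kap - 2) / (2 * (c' * C)))) with ((kap - 2) / 2) in He4 by (field; nra). lra. }
  set (a := as_ + eta).
  destruct (Hpar a as_ ltac:(unfold a, beta; lra) ltac:(unfold beta; lra)) as [P1 P2].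
  replace (a - as_) with eta in P1, P2 by (unfold a; ring).
  rewrite (Rabs_right eta) in P1, P2 by lra.
  assert (HvaR : V psi a R <= b - eps + eps / 4).
  { specialize (Hbnd R ltac:(lra)). pose proof (Rle_abs (V psi a R - V psi as_ R)). lra. }
  assert (HvaR1 : v1 - C * eta <= V psi a R).
  { assert (v1 <= V psi as_ R) by (apply (V_mono psi A); auto; split; [lra|]; unfold R2 in HR; pose proof (Rmax_l R1 (b / d)); lra).
    rewrite <- Rabs_Ropp, Ropp_minus_distr in P1. pose proof (Rle_abs (V psi as_ R - V psi a R)). lra. }
  assert (Hkap2 : kap2 <= c' * V psi a R).
  { apply Rle_trans with (c' * (v1 - C * eta)); [|apply Rmult_le_compat_l; lra].
    replace (c' * (v1 - C * eta)) with (kap - c' * C * eta) by (rewrite <- Hkapv; ring).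
    unfold kap2. lra. }
  assert (HDa : a * R * R * exp (- Ii psi (V psi a) R) <= th + R * C * eta).
  { pose proof (Rle_abs (a * R * exp (- Ii psi (V psi a) R) - as_ * R * exp (- Ii psi (V psi as_) R))).
    assert (a * R * exp (- Ii psi (V psi a) R) <= as_ * R * exp (- Ii psi (V psi as_) R) + C * eta) by lra.
    apply (Rmult_le_compat_l R) in H1; [|lra].
    replace (a * R * R * exp (- Ii psi (V psi a) R)) with (R * (a * R * exp (- Ii psi (V psi a) R))) by ring.
    replace (as_ * R * R * exp (- Ii psi (V psi as_) R)) with (R * (as_ * R * exp (- Ii psi (V psi as_) R))) in HRth by ring.
    nra. }
  assert (HSa : S a).
  { split; [unfold a; lra|]. intros r Hr.
    destruct (Rle_dec r R) as [HrR|HrR].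
    - apply Rle_lt_trans with (V psi a R); [apply (V_mono psi A); auto; unfold a; lra| lra].
    - apply Rnot_le_lt in HrR. apply Rnot_le_lt. intros Hge.
      assert (HaRb : V psi a R < b) by lra.
      destruct (hit psi A a R r b H ltac:(unfold a; lra) ltac:(lra) (conj HaRb Hge)) as [r2 [Hr2 Er2]].
      assert (Hbd : b / R <= d).
      { assert (b / d <= R) by (unfold R2 in HR; pose proof (Rmax_r R1 (b / d)); lra).
        apply (Rmult_le_reg_r R); [lra|]. unfold Rdiv at 1. rewrite Rmult_assoc, Rinv_l by lra.
        apply (Rmult_le_compat_l d) in H0; [|lra]. replace (d * (b / d)) with b in H0 by (field; lra). lra. }
      pose proof (tail psi A a R kap2 c' d b r2 H ltac:(unfold a; lra) HR0 Hk2 Hc'0 Hpd Hbd Hkap2 ltac:(lra) ltac:(lra)) as Ht.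
      rewrite Er2 in Ht.
      assert (a * R * R * exp (- Ii psi (V psi a) R) / (kap2 - 2) <= eps / 2).
      { apply (Rmult_le_reg_r (kap2 - 2)); [lra|]. unfold Rdiv at 1. rewrite Rmult_assoc, Rinv_l by lra.
        unfold th in HDa. lra. }
      lra. }
  specialize (Hub a HSa). unfold a in Hub. lra.
Qed.

Lemma right_lim (f : R -> R) l : filterlim f (at_right 0) (locally l) ->
  forall eps, 0 < eps -> exists d, 0 < d /\ forall y, 0 < y < d -> Rabs (f y - l) < eps.
Proof.
  intros H eps He.
  destruct (H (ball l (mkposreal eps He)) (locally_ball l (mkposreal eps He))) as [d Hd].
  exists d. split; [apply cond_pos|]. intros y Hy. apply (Hd y).
  - change (Rabs (y - 0) < d). rewrite Rminus_0_r, Rabs_right; lra.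
  - lra.
Qed.

Lemma glue (f : R -> R) : (forall x, 0 < x -> continuity_pt f x) ->
  (forall eps, 0 < eps -> exists d, 0 < d /\ forall y, 0 < y < d -> Rabs (f y - f 0) < eps) ->
  Cont (fun p => f (Rmax 0 p)).
Proof.
  intros Hc H0 x. apply cont_intro. intros eps He.
  destruct (Rlt_dec 0 x) as [Hx|Hx].
  - destruct (cont_elim f x (Hc x Hx) eps He) as [d [Hd Hf]].
    exists (Rmin d x). split; [apply Rmin_pos; lra|]. intros y Hy.
    assert (Hy1 : Rabs (y - x) < d) by (eapply Rlt_le_trans; [exact Hy| apply Rmin_l]).
    assert (Hy2 : Rabs (y - x) < x) by (eapply Rlt_le_trans; [exact Hy| apply Rmin_r]).
    apply Rabs_def2 in Hy2.
    rewrite (Rmax_right 0 y), (Rmax_right 0 x) by lra. apply Hf, Hy1.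
  - apply Rnot_lt_le in Hx. destruct (Req_dec x 0) as [->|Hx0].
    + destruct (H0 eps He) as [d [Hd Hf]]. exists d. split; auto. intros y Hy.
      rewrite (Rmax_left 0 0) by lra. rewrite Rminus_0_r in Hy.
      destruct (Rle_dec y 0) as [Hy0|Hy0].
      * rewrite (Rmax_left 0 y) by lra. unfold Rminus; rewrite Rplus_opp_r, Rabs_R0; lra.
      * rewrite (Rmax_right 0 y) by lra. apply Hf. apply Rnot_le_lt in Hy0.
        rewrite Rabs_right in Hy by lra. lra.
    + exists (- x). split; [lra|]. intros y Hy. apply Rabs_def2 in Hy.
      rewrite (Rmax_left 0 y), (Rmax_left 0 x) by lra. unfold Rminus; rewrite Rplus_opp_r, Rabs_R0; lra.
Qed.

Lemma rderiv_cont (f : R -> R) d : is_right_derive f 0 d ->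
  forall eps, 0 < eps -> exists dl, 0 < dl /\ forall y, 0 < y < dl -> Rabs (f y - f 0) < eps.
Proof.
  intros H eps He. destruct (right_lim _ _ H 1 ltac:(lra)) as [d1 [Hd1 Hf]].
  pose proof (Rabs_pos d).
  exists (Rmin d1 (eps / (Rabs d + 1))). split.
  { apply Rmin_pos; [lra| apply Rdiv_lt_0_compat; lra]. }
  intros y Hy.
  assert (Hy1 : y < d1) by (eapply Rlt_le_trans; [apply Hy| apply Rmin_l]).
  assert (Hy2 : y < eps / (Rabs d + 1)) by (eapply Rlt_le_trans; [apply Hy| apply Rmin_r]).
  specialize (Hf y (conj (proj1 Hy) Hy1)). rewrite Rminus_0_r in Hf.
  assert (Hq : Rabs ((f y - f 0) / y) < Rabs d + 1).
  { replace ((f y - f 0) / y) with (((f y - f 0) / y - d) + d) by ring.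
    eapply Rle_lt_trans; [apply Rabs_triang| lra]. }
  rewrite Rabs_div in Hq by lra. rewrite (Rabs_right y) in Hq by lra.
  apply (Rmult_lt_compat_r y) in Hq; [|lra].
  unfold Rdiv in Hq. rewrite Rmult_assoc, Rinv_l, Rmult_1_r in Hq by lra.
  apply (Rmult_lt_compat_l (Rabs d + 1)) in Hy2; [|lra].
  replace ((Rabs d + 1) * (eps / (Rabs d + 1))) with eps in Hy2 by (field; lra).
  lra.
Qed.

Definition psi_of (phi : R -> R) (p : R) := Rmax 0 p * phi (Rmax 0 p).


Lemma psi_props (phi : R -> R) (A : R) :
  C1_nonneg phi ->
  (forall r, 0 <= r -> 0 <= phi r) ->
  0 < phi 0 ->
  (forall r, 0 <= r -> phi r <= phi 0) ->
  (forall r, 0 <= r -> Rabs (r * phi r) <= A) ->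
  PsiOK (psi_of phi) A /\
  (forall p, 0 <= p -> psi_of phi p <= phi 0 * p) /\
  (forall c, c < phi 0 -> exists d, 0 < d /\ forall p, 0 <= p <= d -> c * p <= psi_of phi p).
Proof.
  intros [f' [Hd [Hrd [Hc Hlim]]]] Hpos Hphi0 Hmax HA.
  assert (Cphi : Cont (fun p => phi (Rmax 0 p))).
  { apply glue.
    - intros x Hx. apply (is_derive_cont_pt _ _ (f' x)). apply Hd, Hx.
    - apply (rderiv_cont phi (f' 0) Hrd). }
  assert (Cf' : Cont (fun p => f' (Rmax 0 p))).
  { apply glue.
    - intros x Hx. apply continuity_pt_filterlim. apply Hc, Hx.
    - intros eps He. destruct (right_lim f' (f' 0) Hlim eps He) as [d [Hd0 Hf]]. exists d. split; auto. }
  assert (Cmax : Cont (fun p => Rmax 0 p)).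
  { apply (glue (fun p => p)).
    - intros x _. apply continuity_pt_id.
    - intros eps He. exists eps. split; auto. intros y Hy. rewrite Rminus_0_r, Rabs_right; lra. }
  split; [split; [|split]|split].
  - intros x. unfold psi_of. apply (Cont_mult (fun p => Rmax 0 p) (fun p => phi (Rmax 0 p))); auto.
  - intros x. unfold psi_of. pose proof (Rmax_l 0 x).
    specialize (HA _ H). specialize (Hpos _ H). split.
    + apply Rmult_le_pos; lra.
    + eapply Rle_trans; [apply Rle_abs| exact HA].
  - intros P HP.
    destruct (continuity_ab_maj (fun p => Rabs (f' (Rmax 0 p))) 0 P HP) as [Mx [HMx _]].
    { intros c _. apply (Cont_abs _ Cf'). }
    set (M := Rabs (f' (Rmax 0 Mx))) in *.
    assert (HM0 : 0 <= M) by apply Rabs_pos.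
    exists (phi 0 + P * M + 1). split; [nra|].
    intros x y Hx Hy. unfold psi_of. rewrite (Rmax_right 0 x), (Rmax_right 0 y) by lra.
    assert (Hphixy : Rabs (phi x - phi y) <= M * Rabs (x - y)).
    { destruct (MVT_gen (fun p => phi (Rmax 0 p)) y x f') as [c [Hc1 Hc2]].
      - intros z Hz. assert (Hz0 : 0 < z).
        { destruct Hz as [Hz _]. eapply Rle_lt_trans; [|exact Hz]. apply Rmin_glb; lra. }
        apply (is_derive_ext_loc phi).
        + exists (mkposreal z Hz0). intros w Hw. change (Rabs (w - z) < z) in Hw. apply Rabs_def2 in Hw.
          rewrite Rmax_right by lra. reflexivity.
        + apply Hd, Hz0.
      - intros z _. apply Cphi.
      - rewrite (Rmax_right 0 x), (Rmax_right 0 y) in Hc2 by lra. rewrite Hc2.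
        assert (Hc0 : 0 <= c <= P).
        { destruct Hc1 as [Hc1 Hc1']. split.
          - eapply Rle_trans; [|exact Hc1]. apply Rmin_glb; lra.
          - eapply Rle_trans; [exact Hc1'|]. apply Rmax_lub; lra. }
        specialize (HMx c Hc0). simpl in HMx. rewrite (Rmax_right 0 c) in HMx by lra.
        rewrite Rabs_mult. apply Rmult_le_compat_r; [apply Rabs_pos| exact HMx]. }
    replace (x * phi x - y * phi y) with ((x - y) * phi x + y * (phi x - phi y)) by ring.
    eapply Rle_trans; [apply Rabs_triang|]. rewrite !Rabs_mult.
    rewrite (Rabs_right (phi x)) by (apply Rle_ge, Hpos; lra). rewrite (Rabs_right y) by lra.
    pose proof (Hmax x ltac:(lra)). pose proof (Hpos x ltac:(lra)). pose proof (Rabs_pos (x - y)).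
    assert (Rabs (x - y) * phi x <= Rabs (x - y) * phi 0) by (apply Rmult_le_compat_l; lra).
    assert (y * Rabs (phi x - phi y) <= P * (M * Rabs (x - y))).
    { apply Rmult_le_compat; try lra. apply Rabs_pos. }
    nra.
  - intros p Hp. unfold psi_of. rewrite Rmax_right by lra. pose proof (Hmax p Hp). nra.
  - intros c Hc0. destruct (rderiv_cont phi (f' 0) Hrd (phi 0 - c) ltac:(lra)) as [d [Hd0 Hf]].
    exists (d / 2). split; [lra|]. intros p Hp. unfold psi_of. rewrite Rmax_right by lra.
    destruct (Req_dec p 0) as [->|Hp0]; [lra|].
    specialize (Hf p ltac:(lra)). apply Rabs_def2 in Hf.
    destruct Hf as [_ Hf]. assert (c <= phi p) by lra. nra.
Qed.

Theorem proposition3p3 (phi : R -> R) (A_inf : R) :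
  C1_nonneg phi ->
  (forall r, 0 <= r -> 0 <= phi r) ->
  0 < phi 0 ->
  (forall r, 0 <= r -> phi r <= phi 0) ->
  0 < A_inf ->
  (forall r, 0 <= r -> Rabs (r * phi r) <= A_inf) ->
  (exists r0, 0 <= r0 /\ Rabs (r0 * phi r0) = A_inf) ->
  forall b : R, 4 / phi 0 < b ->
  exists (v v' v'' : R -> R),
    (forall r, 0 < r -> is_derive v r (v' r)) /\
    (forall r, 0 < r -> is_derive v' r (v'' r)) /\
    (forall r, 0 < r -> 0 <= v r) /\
    (forall r, 0 < r ->
       r * v'' r = v' r * (1 - v r * phi (v r / r))) /\
    v 0 = 0 /\
    is_right_derive v 0 0 /\
    is_lim v p_infty b.
Proof.
  intros HC1 Hpos Hphi0 Hmax HA HAb _ b Hb.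
  destruct (psi_props phi A_inf HC1 Hpos Hphi0 Hmax HAb) as [H [Q1 Q2]].
  set (psi := psi_of phi) in *.
  destruct (main_exists psi A_inf (phi 0) b H HA Hphi0 Q1 Q2 Hb) as [a [Ha [Hle Happ]]].
  set (v := V psi a).
  set (Iv := Ii psi v).
  exists v, (fun r => a * r * exp (- Iv r)),
    (fun r => a * exp (- Iv r) - a * r * exp (- Iv r) * psi (v r / r)).
  split; [|split; [|split; [|split; [|split; [|split]]]]].
  - intros r Hr. apply (V_deriv psi A_inf); auto.
  - intros r Hr. pose proof (I_deriv_pos psi A_inf a r H Ha Hr) as DI. fold v Iv in DI.
    auto_derive.
    + exists (psi (v r / r)). exact DI.
    + replace (Derive (fun x => Iv x) r) with (psi (v r / r)) by (symmetry; apply is_derive_unique; exact DI).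
      ring.
  - intros r Hr. apply (V_nonneg psi A_inf); auto; lra.
  - intros r Hr.
    assert (Hvr : 0 <= v r / r) by (apply Rdiv_le_0_compat; [apply (V_nonneg psi A_inf); auto; lra| lra]).
    unfold psi, psi_of. rewrite Rmax_right by lra.
    field. lra.
  - apply (V_0 psi A_inf); auto.
  - unfold is_right_derive. apply filterlim_locally. intros eps.
    exists (mkposreal (2 * eps / (a + 1)) ltac:(apply Rdiv_lt_0_compat; [pose proof (cond_pos eps); lra| lra])).
    intros y Hy Hy0. simpl in Hy. change (Rabs (y - 0) < 2 * eps / (a + 1)) in Hy.
    rewrite Rminus_0_r, Rabs_right in Hy by lra.
    change (Rabs ((v y - v 0) / (y - 0) - 0) < eps).
    replace (v 0) with 0 by (symmetry; apply (V_0 psi A_inf); auto). rewrite !Rminus_0_r.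
    destruct (V_bounds psi A_inf a y H Ha ltac:(lra)) as [B1 B2]. fold v in B1, B2.
    assert (0 <= v y / y) by (apply Rdiv_le_0_compat; lra).
    rewrite Rabs_right by lra.
    assert (v y / y <= a * y / 2).
    { apply (Rmult_le_reg_r y); [lra|]. unfold Rdiv. rewrite Rmult_assoc, Rinv_l by lra. nra. }
    apply (Rmult_lt_compat_l (a + 1)) in Hy; [|lra].
    replace ((a + 1) * (2 * eps / (a + 1))) with (2 * eps) in Hy by (field; lra).
    assert (a * y <= (a + 1) * y) by lra.
    lra.
  - apply is_lim_spec. intros eps.
    destruct (Happ eps (cond_pos eps)) as [r [Hr Hbr]].
    exists r. intros x Hx.
    assert (v r <= v x) by (unfold v; apply (V_mono psi A_inf a r x H Ha); split; [exact Hr| left; exact Hx]).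
    assert (Hx0 : 0 <= x) by lra.
    specialize (Hle x Hx0). fold v in Hle.
    fold v in Hbr. apply Rabs_def1; lra.
Qed.
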